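(* Let $\Omega$ be a set, let $n\ge 1$, and let $H_1,\ldots,H_n$ and $G$ be subgroups of $\mathrm{Sym}(\Omega)$ such that the $n$-tuple $(H_1,\ldots,H_n)$ is confined by $G$. Let $P\subset \mathrm{Sym}(\Omega)$ be a confining subset for $(H_1,\ldots,H_n,G)$ and let $r=|P|$. Assume that $\{\Omega_\sigma\}_{\sigma\in P}$ is a displacement configuration for $P$ such that for every $\sigma\in P$ the group $\mathrm{Rist}_G(\Omega_\sigma)$ is non-trivial and satisfies $\mathrm{FC}_{\leqslant nr}(\mathrm{Rist}_G(\Omega_\sigma))=\{1\}$. Then there exist $\rho\in P$ and $k\le n$ such that $H_k$ contains a non-trivial subgroup $N\le \mathrm{Rist}_G(\Omega_\rho)$ whose normalizer in $\mathrm{Rist}_G(\Omega_\rho)$ has index at most $nr$ in $\mathrm{Rist}_G(\Omega_\rho)$.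
   Context: For subgroups $H_1,\ldots,H_n,G$ of a group $L$, the $n$-tuple $(H_1,\ldots,H_n)$ is confined by $G$ if there exists a finite subset $P$ of non-trivial elements of $L$ such that for every $g\in G$ there exists $j$ with $gH_jg^{-1}\cap P\neq\varnothing$; such a $P$ is called a confining subset for $(H_1,\ldots,H_n,G)$. Here $L=\mathrm{Sym}(\Omega)$, the group of all permutations of $\Omega$. For $\Sigma\subset\Omega$, the rigid stabilizer $\mathrm{Rist}_G(\Sigma)$ is the set of elements of $G$ fixing every point of $\Omega\setminus\Sigma$. For a group $K$ and $m\ge1$, $\mathrm{FC}_{\leqslant m}(K)$ is the set of elements of $K$ whose conjugacy class in $K$ has cardinality at most $m$. If $P$ is a finite set of non-trivial elements of $\mathrm{Sym}(\Omega)$, a collection $\{\Omega_\sigma\}_{\sigma\in P}$ of non-empty subsets of $\Omega$ is a displacement configuration for $P$ if: (C1) for all $\sigma,\rho\in P$, either $\Omega_\sigma=\Omega_\rho$ or $\Omega_\sigma\cap\Omega_\rho=\varnothing$; (C3) for all $\sigma,\rho\in P$, either $\sigma$ fixes $\Omega_\rho$ pointwise, or $\sigma(\Omega_\rho)$ is disjoint from $\bigcup_{\alpha\in P}\Omega_\alpha$; (C4) for all $\sigma\in P$, $\sigma(\Omega_\sigma)$ is disjoint from $\bigcup_{\alpha\in P}\Omega_\alpha$ and from $\bigcup_{\alpha\in P}\sigma^{-1}(\Omega_\alpha)$. *)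

(* Defs.v *)
(* Permutations of an arbitrary (possibly infinite) type Omega
   are represented as bijective functions Omega -> Omega; subsets of Sym(Omega)
   as predicates on such functions. *)
From Stdlib Require Import List Arith.
Import ListNotations.

Section Defs.
Variable Omega : Type.

Definition perm := Omega -> Omega.
Definition pset := perm -> Prop.

Definition idp : perm := fun x => x.
Definition comp (f g : perm) : perm := fun x => f (g x).

Definition is_perm (f : perm) : Prop :=
  exists g : perm, (forall x, g (f x) = x) /\ (forall x, f (g x) = x).

Definition is_subgroup (H : pset) : Prop :=
  (forall f, H f -> is_perm f) /\ H idp /\
  (forall f g, H f -> H g -> H (comp f g)) /\
  (forall f, H f -> exists g, H g /\ (forall x, g (f x) = x) /\ (forall x, f (g x) = x)).

Definition subset (A B : pset) : Prop := forall f, A f -> B f.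

(* x belongs to g H g^{-1}  (for g a permutation: x = g h g^{-1} iff x g = g h) *)
Definition conj_set (g : perm) (H : pset) : pset :=
  fun x => exists h, H h /\ comp x g = comp g h.

Definition card_le (S : pset) (m : nat) : Prop :=
  exists l : list perm, length l <= m /\ forall y, S y -> In y l.

Definition confining_subset (n : nat) (H : nat -> pset) (G : pset) (P : list perm) : Prop :=
  (forall p, In p P -> is_perm p /\ p <> idp) /\
  forall g, G g -> exists j, j < n /\ exists p, In p P /\ conj_set g (H j) p.

Definition confined (n : nat) (H : nat -> pset) (G : pset) : Prop :=
  exists P : list perm, NoDup P /\ confining_subset n H G P.

(* displacement configuration {Om s}_{s in P}, conditions (C1), (C3), (C4) *)
Definition displacement_configuration (P : list perm) (Om : perm -> Omega -> Prop) : Prop :=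
  (forall s, In s P -> exists x, Om s x) /\
  (forall s r, In s P -> In r P ->
     (forall x, Om s x <-> Om r x) \/ (forall x, ~ (Om s x /\ Om r x))) /\
  (forall s r, In s P -> In r P ->
     (forall x, Om r x -> s x = x) \/
     (forall x, Om r x -> forall a, In a P -> ~ Om a (s x))) /\
  (forall s, In s P -> forall x, Om s x -> forall a, In a P ->
     ~ Om a (s x) /\ ~ Om a (s (s x))).

Definition Rist (G : pset) (Sigma : Omega -> Prop) : pset :=
  fun g => G g /\ forall x, ~ Sigma x -> g x = x.

Definition conj_class (K : pset) (g : perm) : pset :=
  fun y => exists k, K k /\ comp y k = comp k g.

Definition FC_le (m : nat) (K : pset) : pset :=
  fun g => K g /\ card_le (conj_class K g) m.

Definition normalizer (K N : pset) : pset :=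
  fun g => K g /\ forall x, conj_set g N x <-> N x.

Definition index_le (K S : pset) (m : nat) : Prop :=
  exists l : list perm, length l <= m /\ (forall t, In t l -> K t) /\
    forall g, K g -> exists t s, In t l /\ S s /\ g = comp t s.

End Defs.

Arguments idp {Omega}.

(* Main.v *)
Require Import Defs.
From Stdlib Require Import List Arith Lia ClassicalEpsilon Classical FunctionalExtensionality PropExtensionality.
Import ListNotations.

Section Base.
Variable Omega : Type.
Notation perm := (perm Omega).
Notation pset := (pset Omega).
Notation comp := (comp Omega).
Notation is_perm := (is_perm Omega).
Notation is_subgroup := (is_subgroup Omega).
Notation index_le := (index_le Omega).

Definition pinv (f : perm) : perm :=
  match excluded_middle_informative (is_perm f) with
  | left H => proj1_sig (constructive_indefinite_description _ H)
  | right _ => idp end.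

Lemma pinv_spec f : is_perm f -> (forall x, pinv f (f x) = x) /\ (forall x, f (pinv f x) = x).
Proof.
  intro Hf. unfold pinv. destruct (excluded_middle_informative (is_perm f)) as [H|H]; [|contradiction].
  destruct (constructive_indefinite_description _ H) as [g Hg]. simpl. exact Hg.
Qed.
Lemma pinv_l f : is_perm f -> forall x, pinv f (f x) = x.
Proof. intro H; apply (pinv_spec f H). Qed.
Lemma pinv_r f : is_perm f -> forall x, f (pinv f x) = x.
Proof. intro H; apply (pinv_spec f H). Qed.

Lemma perm_inj f : is_perm f -> forall x y, f x = f y -> x = y.
Proof. intros H x y E. rewrite <- (pinv_l f H x), <- (pinv_l f H y), E. reflexivity. Qed.

Lemma pinv_unique f g : is_perm f -> (forall x, g (f x) = x) -> g = pinv f.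
Proof. intros H E. extensionality x. rewrite <- (pinv_r f H x) at 1. apply E. Qed.

Lemma is_perm_id : is_perm idp.
Proof. exists idp; split; reflexivity. Qed.
Lemma is_perm_comp f g : is_perm f -> is_perm g -> is_perm (comp f g).
Proof. intros Hf Hg. exists (comp (pinv g) (pinv f)). unfold comp; split; intro x.
  - rewrite pinv_l by auto. apply pinv_l; auto.
  - rewrite pinv_r by auto. apply pinv_r; auto. Qed.
Lemma is_perm_pinv f : is_perm f -> is_perm (pinv f).
Proof. intros Hf. exists f. split; intro x; [apply pinv_r|apply pinv_l]; auto. Qed.
Lemma pinv_pinv f : is_perm f -> pinv (pinv f) = f.
Proof. intro Hf. symmetry. apply pinv_unique. apply is_perm_pinv; auto. intro; apply pinv_r; auto. Qed.

Lemma comp_pinv_l f : is_perm f -> comp (pinv f) f = idp.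
Proof. intro H; extensionality x; apply pinv_l; auto. Qed.
Lemma comp_pinv_r f : is_perm f -> comp f (pinv f) = idp.
Proof. intro H; extensionality x; apply pinv_r; auto. Qed.
Lemma comp_id_l f : comp idp f = f. Proof. reflexivity. Qed.
Lemma comp_id_r f : comp f idp = f. Proof. reflexivity. Qed.
Lemma comp_assoc f g h : comp f (comp g h) = comp (comp f g) h. Proof. reflexivity. Qed.

Lemma pinv_comp f g : is_perm f -> is_perm g -> pinv (comp f g) = comp (pinv g) (pinv f).
Proof. intros Hf Hg. symmetry. apply pinv_unique. apply is_perm_comp; auto.
  intro x. unfold comp. rewrite pinv_l by auto. apply pinv_l; auto. Qed.
Lemma pinv_id : pinv idp = idp.
Proof. symmetry; apply pinv_unique; [apply is_perm_id| reflexivity]. Qed.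

Lemma sg_perm K f : is_subgroup K -> K f -> is_perm f.
Proof. intros [H _] Hf; auto. Qed.
Lemma sg_id K : is_subgroup K -> K idp.
Proof. intros [_ [H _]]; auto. Qed.
Lemma sg_comp K f g : is_subgroup K -> K f -> K g -> K (comp f g).
Proof. intros [_ [_ [H _]]]; auto. Qed.
Lemma sg_inv K f : is_subgroup K -> K f -> K (pinv f).
Proof. intros HK Hf. pose proof HK as [Hp [_ [_ Hi]]].
  destruct (Hi f Hf) as [g [Hg [E1 E2]]].
  replace (pinv f) with g; auto. apply pinv_unique; auto. Qed.

Definition inco (c : perm) (K : pset) (x : perm) : Prop := exists s, K s /\ x = comp c s.

Lemma inco_refl c K : is_subgroup K -> inco c K c.
Proof. intro HK. exists idp. split; [apply sg_id; auto| reflexivity]. Qed.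

Lemma inco_iff c K x : is_perm c -> (inco c K x <-> K (comp (pinv c) x)).
Proof. intro Hc. split.
  - intros [s [Hs ->]]. rewrite comp_assoc, comp_pinv_l by auto. exact Hs.
  - intro H. exists (comp (pinv c) x). split; auto. rewrite comp_assoc, comp_pinv_r by auto. reflexivity.
Qed.

Lemma inco_sym c K x : is_subgroup K -> inco c K x -> inco x K c.
Proof. intros HK [s [Hs ->]]. exists (pinv s). split. apply sg_inv; auto.
  rewrite <- comp_assoc, comp_pinv_r. reflexivity. eapply sg_perm; eauto. Qed.

Lemma inco_trans a b c K : is_subgroup K -> inco a K b -> inco b K c -> inco a K c.
Proof. intros HK [s [Hs ->]] [t [Ht ->]]. exists (comp s t). split. apply sg_comp; auto. reflexivity. Qed.

Lemma inco_mono c K K' x : (forall g, K g -> K' g) -> inco c K x -> inco c K' x.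
Proof. intros HK [s [Hs ->]]. exists s; auto. Qed.

Definition dec (P : Prop) : {P} + {~P} := excluded_middle_informative P.

End Base.
Arguments pinv {Omega}.
Arguments inco {Omega}.

Ltac sgp := match goal with
 | H : is_subgroup _ ?K |- is_perm _ ?f => apply (sg_perm _ K f H); solve [auto]
 end.

Section Neu.
Variable Omega : Type.
Notation perm := (perm Omega).
Notation pset := (pset Omega).
Notation comp := (comp Omega).
Notation is_perm := (is_perm Omega).
Notation is_subgroup := (is_subgroup Omega).
Notation index_le := (index_le Omega).
Notation subset := (subset Omega).

Fixpoint sep (K : pset) (l : list perm) : Prop :=
  match l with [] => True | g :: l' => (forall h, In h l' -> ~ inco g K h) /\ sep K l' end.

Lemma sep_pair K l : is_subgroup K -> sep K l -> forall a b, In a l -> In b l -> inco a K b -> a = b.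
Proof.
  intros HK. induction l as [|g l IH]; simpl; [tauto|].
  intros [H1 H2] a b [<-|Ha] [<-|Hb] Hab; auto.
  - exfalso; apply (H1 b Hb Hab).
  - exfalso; apply (H1 a Ha). apply inco_sym; auto.
Qed.

Lemma sep_NoDup K l : is_subgroup K -> sep K l -> NoDup l.
Proof.
  intros HK. induction l as [|g l IH]; simpl; intros; [constructor|].
  destruct H as [H1 H2]. constructor; auto. intro Hin. apply (H1 g Hin). apply inco_refl; auto.
Qed.

Lemma greedy R K m : is_subgroup K -> ~ index_le R K m ->
  exists l, length l = S m /\ (forall g, In g l -> R g) /\ sep K l.
Proof.
  intros HK Hn. assert (forall k, k <= S m -> exists l, length l = k /\ (forall g, In g l -> R g) /\ sep K l).
  { induction k as [|k IH]; intros Hk.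
    - exists []. simpl; repeat split; tauto.
    - destruct (IH ltac:(lia)) as [l [Hl [HR Hs]]].
      destruct (classic (exists g, R g /\ forall t, In t l -> ~ inco t K g)) as [[g [Hg Hg2]]|Hno].
      + exists (g :: l). simpl. repeat split; auto.
        * intros g' [<-|H]; auto.
        * intros h Hh Hc. apply (Hg2 h Hh). apply inco_sym; auto.
      + exfalso. apply Hn. exists l. repeat split; [lia|auto|].
        intros g Hg. destruct (classic (exists t, In t l /\ inco t K g)) as [[t [Ht [s [Hs0 ->]]]]|Hc].
        * exists t, s. auto.
        * exfalso. apply Hno. exists g. split; auto. intros t Ht Hi. apply Hc. exists t; auto. }
  apply H; lia.
Qed.

Lemma reps_sep D l : is_subgroup D -> exists X, sep D X /\ (forall x, In x X -> In x l) /\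
  forall t, In t l -> exists x, In x X /\ inco x D t.
Proof.
  intro HD. induction l as [|a l IH].
  - exists []. simpl. repeat split; tauto.
  - destruct IH as [X [H1 [H2 H3]]].
    destruct (classic (exists x, In x X /\ inco x D a)) as [Hex|Hno].
    + exists X. repeat split; auto.
      * intros x Hx; right; auto.
      * intros t [E|Ht]; [subst t; auto|auto].
    + exists (a :: X). simpl. repeat split; auto.
      * intros h Hh Hi. apply Hno. exists h. split; auto. apply inco_sym; auto.
      * intros x [<-|Hx]; auto.
      * intros t [E|Ht].
        -- subst t. exists a. split; auto. apply inco_refl; auto.
        -- destruct (H3 t Ht) as [x [Hx Hx2]]. exists x; auto.
Qed.

Definition bcount {A} (P : A -> Prop) (l : list A) : nat :=
  length (filter (fun x => if dec (P x) then true else false) l).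

Lemma bcount_le {A} (P : A -> Prop) l : bcount P l <= length l.
Proof. unfold bcount. apply filter_length_le. Qed.

Lemma bcount_cons {A} (P : A -> Prop) a l : bcount P (a :: l) = (if dec (P a) then 1 else 0) + bcount P l.
Proof. unfold bcount. simpl. destruct (dec (P a)); reflexivity. Qed.

Lemma union_bound {A B} (X : list A) (F : list B) (P : B -> A -> Prop) :
  (forall x, In x X -> exists b, In b F /\ P b x) ->
  length X <= list_sum (map (fun b => bcount (P b) X) F).
Proof.
  induction X as [|x X IH]; intros Hc; simpl; [lia|].
  assert (E : list_sum (map (fun b => bcount (P b) (x :: X)) F) =
    list_sum (map (fun b => if dec (P b x) then 1 else 0) F) + list_sum (map (fun b => bcount (P b) X) F)).
  { clear. induction F as [|b F IH]; simpl; [lia|]. rewrite bcount_cons, IH. lia. }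
  rewrite E. assert (1 <= list_sum (map (fun b => if dec (P b x) then 1 else 0) F)).
  { destruct (Hc x (or_introl eq_refl)) as [b [Hb Hp]]. clear -Hb Hp.
    induction F as [|b' F IH]; simpl in *; [tauto|]. destruct Hb as [E|Hb].
    - subst b'. destruct (dec (P b x)); [lia|contradiction].
    - specialize (IH Hb). lia. }
  specialize (IH (fun x' Hx' => Hc x' (or_intror Hx'))). lia.
Qed.

Lemma sum_bound {B} (F : list B) (f : B -> nat) k M :
  (forall b, In b F -> f b * k <= M) -> list_sum (map f F) * k <= length F * M.
Proof.
  induction F as [|b F IH]; intros H; simpl; [lia|].
  specialize (H b (or_introl eq_refl)) as H1. specialize (IH (fun b' Hb' => H b' (or_intror Hb'))). nia.
Qed.

Lemma NoDup_map_on {A B} (f : A -> B) l : NoDup l -> (forall a b, In a l -> In b l -> f a = f b -> a = b) -> NoDup (map f l).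
Proof.
  induction l as [|a l IH]; intros Hn Hi; simpl; [constructor|].
  inversion Hn; subst. constructor.
  - intro Hin. apply in_map_iff in Hin as [b [Hb Hbl]]. assert (b = a) by (apply Hi; simpl; auto). subst; contradiction.
  - apply IH; auto. intros; apply Hi; simpl; auto.
Qed.

Lemma NoDup_prod {A B} (l1 : list A) (l2 : list B) : NoDup l1 -> NoDup l2 -> NoDup (list_prod l1 l2).
Proof.
  induction l1 as [|a l1 IH]; intros H1 H2; simpl; [constructor|].
  inversion H1; subst. apply NoDup_app; auto.
  - apply NoDup_map_on; auto. intros x y _ _ E; inversion E; auto.
  - intros [a' b'] Hin Hin2. apply in_map_iff in Hin as [b [E _]]. inversion E; subst.
    apply in_prod_iff in Hin2 as [Ha _]. contradiction.
Qed.

Lemma count_main R D F m N0 :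
  is_subgroup R -> is_subgroup D -> subset D R -> index_le R D N0 ->
  (forall c K, In (c,K) F -> is_subgroup K /\ subset D K /\ subset K R /\ R c /\ ~ index_le R K m) ->
  length F <= m ->
  (forall g, R g -> exists c K, In (c,K) F /\ inco c K g) -> False.
Proof.
  intros HR HD HDR [l [Hl [HlR Hlc]]] HF HFm Hcov.
  destruct (reps_sep D l HD) as [X [HXs [HXl HXc]]].
  assert (HXR : forall x, In x X -> R x) by (intros; apply HlR, HXl; auto).
  assert (HXcov : forall g, R g -> exists x, In x X /\ inco x D g).
  { intros g Hg. destruct (Hlc g Hg) as [t [s [Ht [Hs ->]]]]. destruct (HXc t Ht) as [x [Hx Hxt]].
    exists x. split; auto. eapply inco_trans; eauto. exists s; auto. }
  set (rep := fun g => match dec (exists x, In x X /\ inco x D g) with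
                       | left H => proj1_sig (constructive_indefinite_description _ H) | right _ => idp end).
  assert (Hrep : forall g, R g -> In (rep g) X /\ inco (rep g) D g).
  { intros g Hg. unfold rep. destruct (dec _) as [H|H].
    - destruct (constructive_indefinite_description _ H) as [x Hx]; simpl; auto.
    - exfalso; apply H; auto. }
  assert (Hpiece : forall c K, In (c,K) F -> bcount (fun x => inco c K x) X * S m <= length X).
  { intros c K HcK. destruct (HF c K HcK) as [HK [HDK [HKR [Hc HnK]]]].
    destruct (greedy R K m HK HnK) as [gs [Hgl [HgR Hgs]]].
    set (Xf := filter (fun x => if dec (inco c K x) then true else false) X).
    assert (HXf : forall x, In x Xf -> In x X /\ inco c K x).
    { intros x Hx. unfold Xf in Hx. apply filter_In in Hx as [H1 H2]. destruct (dec _); auto; discriminate. }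
    set (img := map (fun pr => rep (comp (comp (fst pr) (pinv c)) (snd pr))) (list_prod gs Xf)).
    assert (Hlen : length img = S m * bcount (fun x => inco c K x) X).
    { unfold img. rewrite length_map, length_prod, Hgl. reflexivity. }
    assert (Hcp : is_perm c) by (apply (sg_perm Omega R); auto).
    assert (HinR : forall pr, In pr (list_prod gs Xf) -> R (comp (comp (fst pr) (pinv c)) (snd pr))).
    { intros [g x] Hin. apply in_prod_iff in Hin as [Hg Hx]. simpl.
      apply sg_comp; auto. apply sg_comp; auto. apply sg_inv; auto. apply HXR, HXf; auto. }
    assert (HND : NoDup img).
    { unfold img. apply NoDup_map_on.
      - apply NoDup_prod. eapply sep_NoDup; eauto. unfold Xf. apply NoDup_filter. eapply (sep_NoDup D); eauto.

      - intros [g x] [g' x'] Hin Hin' E.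
        pose proof (HinR _ Hin) as Ha. pose proof (HinR _ Hin') as Hb. simpl in Ha, Hb, E.
        apply in_prod_iff in Hin as [Hg Hx]. apply in_prod_iff in Hin' as [Hg' Hx'].
        destruct (HXf x Hx) as [HxX [s [Hs Exs]]]. destruct (HXf x' Hx') as [Hx'X [s' [Hs' Exs']]].
        assert (Ea : comp (comp g (pinv c)) x = comp g s) by (rewrite Exs; extensionality w; unfold comp; rewrite pinv_l; auto).
        assert (Eb : comp (comp g' (pinv c)) x' = comp g' s') by (rewrite Exs'; extensionality w; unfold comp; rewrite pinv_l; auto).
        destruct (Hrep _ Ha) as [_ H1]. destruct (Hrep _ Hb) as [_ H2]. rewrite E in H1.
        assert (H3 : inco (comp (comp g (pinv c)) x) D (comp (comp g' (pinv c)) x')).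
        { eapply inco_trans; eauto. apply inco_sym; eauto. }
        rewrite Ea, Eb in H3.
        assert (Hgp : is_perm g) by (apply (sg_perm Omega R); auto).
        assert (Hgp' : is_perm g') by (apply (sg_perm Omega R); auto).
        assert (Hsp : is_perm s) by (apply (sg_perm Omega K); auto).
        assert (Hsp' : is_perm s') by (apply (sg_perm Omega K); auto).
        apply inco_iff in H3; [|apply is_perm_comp; auto].
        assert (Hgg : g = g').
        { apply (sep_pair K gs HK Hgs); auto. apply inco_iff; auto.
          assert (K (comp s (comp (comp (pinv (comp g s)) (comp g' s')) (pinv s')))).
          { apply sg_comp; auto. apply sg_comp; auto. apply sg_inv; auto. }
          replace (comp (pinv g) g') with (comp s (comp (comp (pinv (comp g s)) (comp g' s')) (pinv s'))); auto.
          rewrite pinv_comp by auto. extensionality w. unfold comp.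
          rewrite pinv_r by auto. rewrite pinv_r by auto. reflexivity. }
        subst g'. f_equal.
        apply (sep_pair D X HD HXs); auto. apply inco_iff. apply (sg_perm Omega R); auto.
        replace (comp (pinv x) x') with (comp (pinv (comp g s)) (comp g s')); auto.
        rewrite Exs, Exs'. rewrite !pinv_comp by auto. extensionality w. unfold comp.
        rewrite pinv_l by auto. rewrite pinv_l by auto. reflexivity. }
    assert (Hinc : incl img X).
    { intros y Hy. unfold img in Hy. apply in_map_iff in Hy as [pr [<- Hpr]]. apply Hrep, HinR; auto. }
    pose proof (NoDup_incl_length HND Hinc). lia. }
  pose proof (union_bound X F (fun cK x => inco (fst cK) (snd cK) x)) as UB.
  assert (UB' : length X <= list_sum (map (fun cK => bcount (fun x => inco (fst cK) (snd cK) x) X) F)).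
  { apply UB. intros x Hx. destruct (Hcov x (HXR x Hx)) as [c [K [H1 H2]]]. exists (c,K); auto. }
  pose proof (sum_bound F (fun cK => bcount (fun x => inco (fst cK) (snd cK) x) X) (S m) (length X)) as SB.
  assert (SB' : list_sum (map (fun cK => bcount (fun x => inco (fst cK) (snd cK) x) X) F) * S m <= length F * length X).
  { apply SB. intros [c K] H. apply Hpiece; auto. }
  assert (1 <= length X).
  { destruct (HXcov idp (sg_id Omega R HR)) as [x [Hx _]]. destruct X; simpl in *; [contradiction|lia]. }
  nia.
Qed.

End Neu.

Section Neu2.
Variable Omega : Type.
Notation perm := (perm Omega).
Notation pset := (pset Omega).
Notation comp := (comp Omega).
Notation is_perm := (is_perm Omega).
Notation is_subgroup := (is_subgroup Omega).
Notation index_le := (index_le Omega).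
Notation subset := (subset Omega).

Lemma sg_inter (A B : pset) : is_subgroup A -> is_subgroup B -> is_subgroup (fun g => A g /\ B g).
Proof.
  intros HA HB. split; [|split; [|split]].
  - intros f [Hf _]. sgp.
  - split; apply sg_id; auto.
  - intros f g [H1 H2] [H3 H4]; split; apply sg_comp; auto.
  - intros f [H1 H2]. exists (pinv f). split; [split; apply sg_inv; auto|].
    split; intro x; [apply pinv_l|apply pinv_r]; sgp.
Qed.

Lemma index_mono R S S' m : (forall g, S g -> S' g) -> index_le R S m -> index_le R S' m.
Proof. intros H [l [H1 [H2 H3]]]. exists l. repeat split; auto.
  intros g Hg. destruct (H3 g Hg) as [t [s [? [? ?]]]]. exists t, s; auto. Qed.

Lemma index_le_mono R S m m' : m <= m' -> index_le R S m -> index_le R S m'.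
Proof. intros H [l [H1 [H2 H3]]]. exists l. repeat split; auto; lia. Qed.

Lemma index_inter R A B a b : is_subgroup R -> is_subgroup A -> is_subgroup B ->
  subset A R -> subset B R -> index_le R A a -> index_le R B b -> index_le R (fun g => A g /\ B g) (a*b).
Proof.
  intros HR HA HB HAR HBR [la [Hla [HlaR Hlac]]] [lb [Hlb [HlbR Hlbc]]].
  set (u := fun pr : perm * perm => match dec (exists g, R g /\ inco (fst pr) A g /\ inco (snd pr) B g) with
     | left H => proj1_sig (constructive_indefinite_description _ H) | right _ => idp end).
  exists (map u (list_prod la lb)). repeat split.
  - rewrite length_map, length_prod. nia.
  - intros t Ht. apply in_map_iff in Ht as [pr [<- _]]. unfold u. destruct (dec _) as [H|H].
    + destruct (constructive_indefinite_description _ H) as [g Hg]. simpl; apply Hg.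
    + apply sg_id; auto.
  - intros g Hg. destruct (Hlac g Hg) as [s [al [Hs [Hal Eg]]]]. destruct (Hlbc g Hg) as [t [be [Ht [Hbe Eg']]]].
    assert (Hex : exists g, R g /\ inco (fst (s,t)) A g /\ inco (snd (s,t)) B g).
    { exists g. simpl. split; auto. split; [exists al|exists be]; auto. }
    assert (Hin : In (s,t) (list_prod la lb)) by (apply in_prod; auto).
    assert (Hu : R (u (s,t)) /\ inco s A (u (s,t)) /\ inco t B (u (s,t))).
    { unfold u. destruct (dec _) as [H|H]; [|contradiction].
      destruct (constructive_indefinite_description _ H) as [g0 Hg0]. simpl. exact Hg0. }
    destruct Hu as [Hg0 [H1 H2]].
    exists (u (s,t)), (comp (pinv (u (s,t))) g). assert (Hp : is_perm (u (s,t))) by sgp.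
    split; [|split].
    + apply in_map_iff. exists (s,t). split; auto.
    + split.
      * apply inco_iff; auto. eapply inco_trans; eauto. apply inco_sym; eauto. exists al; auto.
      * apply inco_iff; auto. eapply inco_trans; eauto. apply inco_sym; eauto. exists be; auto.
    + rewrite comp_assoc, comp_pinv_r; auto.
Qed.

Lemma index_trans R D K a b : is_subgroup R -> subset D R -> index_le R D a ->
  index_le D (fun g => K g /\ D g) b -> index_le R K (a*b).
Proof.
  intros HR HDR [la [Hla [HlaR Hlac]]] [lb [Hlb [HlbD Hlbc]]].
  exists (map (fun pr => comp (fst pr) (snd pr)) (list_prod la lb)). repeat split.
  - rewrite length_map, length_prod. nia.
  - intros t Ht. apply in_map_iff in Ht as [[u v] [<- Hin]]. apply in_prod_iff in Hin as [Hu Hv].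
    simpl. apply sg_comp; auto.
  - intros g Hg. destruct (Hlac g Hg) as [u [d [Hu [Hd ->]]]].
    destruct (Hlbc d Hd) as [v [k [Hv [[Hk _] ->]]]]. exists (comp u v), k. split; [|split; auto].
    apply in_map_iff. exists (u,v). split; auto. apply in_prod; auto.
Qed.

Definition DF (R : pset) (F : list (perm * pset)) : pset := fun g => R g /\ forall c K, In (c,K) F -> K g.

Lemma DF_sg R F : is_subgroup R -> (forall c K, In (c,K) F -> is_subgroup K) -> is_subgroup (DF R F).
Proof.
  intros HR HF. unfold DF. split; [|split; [|split]].
  - intros f [Hf _]. sgp.
  - split. apply sg_id; auto. intros c K H. apply sg_id. eapply HF; eauto.
  - intros f g [H1 H2] [H3 H4]; split. apply sg_comp; auto. intros c K H; apply sg_comp; [eapply HF; eauto|eapply H2; eauto|eapply H4; eauto].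
  - intros f [H1 H2]. exists (pinv f). split; [split; [apply sg_inv; auto|intros c K H; apply sg_inv; [eapply HF; eauto|eapply H2; eauto]]|].
    split; intro x; [apply pinv_l|apply pinv_r]; sgp.
Qed.

Lemma fin_inter R F : is_subgroup R ->
  (forall c K, In (c,K) F -> is_subgroup K /\ subset K R /\ exists m, index_le R K m) ->
  exists N, index_le R (DF R F) N.
Proof.
  intros HR. induction F as [|[c K] F IH]; intros HF.
  - exists 1. exists [idp]. repeat split; simpl; auto.
    + intros t [<-|[]]. apply sg_id; auto.
    + intros g Hg. exists idp, g. split; auto. split; [|reflexivity]. split; auto. intros _ _ [].
  - destruct IH as [N HN]. { intros c0 K0 H0; apply (HF c0 K0); simpl; auto. }
    destruct (HF c K (or_introl eq_refl)) as [HK [HKR [m Hm]]].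
    exists (m*N). eapply index_mono; [|apply (index_inter R K (DF R F) m N); auto].
    + intros g [Hg1 [Hg2 Hg3]]. split; auto. intros c' K' [E|Hin]; [inversion E; subst; auto|eapply Hg3; eauto].
    + apply DF_sg; auto. intros c0 K0 H0; apply (HF c0 K0); simpl; auto.
    + intros g [? ?]; auto.
Qed.

Lemma Zlem D : is_subgroup D -> forall S : list pset,
  (forall K, In K S -> is_subgroup K /\ subset K D /\ forall m, ~ index_le D K m) ->
  forall L : list (perm * nat), (forall c i, In (c,i) L -> i < length S /\ D c) ->
  ~ (forall g, D g -> exists c i, In (c,i) L /\ inco c (nth i S (fun _ => False)) g).
Proof.
  intros HD S. induction S as [|K S IH]; intros HS L HL Hcov.
  - destruct (Hcov idp (sg_id _ D HD)) as [c [i [Hin _]]]. destruct (HL c i Hin) as [Hi _]. simpl in Hi; lia.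
  - destruct (HS K (or_introl eq_refl)) as [HK [HKD HKi]].
    assert (Hy : exists y, D y /\ forall c, In (c,0) L -> ~ inco c K y).
    { apply NNPP. intro Hno. apply (HKi (length L)).
      exists (map fst (filter (fun ci => Nat.eqb (snd ci) 0) L)). repeat split.
      - rewrite length_map. apply filter_length_le.
      - intros t Ht. apply in_map_iff in Ht as [[c i] [<- Hin]]. apply filter_In in Hin as [Hin _].
        apply (HL c i Hin).
      - intros g Hg. apply NNPP. intro Hng. apply Hno. exists g. split; auto. intros c Hc [s [Hs ->]].
        apply Hng. exists c, s. split; [|auto]. apply in_map_iff. exists (c,0). split; auto.
        apply filter_In. split; auto. }
    destruct Hy as [y [Hy Hyc]].
    set (Lb := filter (fun ci => negb (Nat.eqb (snd ci) 0)) L).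
    set (La := filter (fun ci => Nat.eqb (snd ci) 0) L).
    set (L' := map (fun ci => (fst ci, pred (snd ci))) Lb ++
               flat_map (fun a => map (fun ci => (comp (comp (fst a) (pinv y)) (fst ci), pred (snd ci))) Lb) La).
    assert (HLb : forall c i, In (c,i) Lb <-> In (c,i) L /\ i <> 0).
    { intros c i. unfold Lb. rewrite filter_In. simpl. destruct (Nat.eqb_spec i 0); simpl; split; intros [? ?]; split; auto; (congruence || lia). }
    assert (HLa : forall c i, In (c,i) La <-> In (c,i) L /\ i = 0).
    { intros c i. unfold La. rewrite filter_In. simpl. destruct (Nat.eqb_spec i 0); simpl; split; intros [? ?]; split; auto; (congruence || lia). }
    apply (IH (fun K' HK' => HS K' (or_intror HK')) L').
    + intros c i Hin. unfold L' in Hin. apply in_app_iff in Hin as [Hin|Hin].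
      * apply in_map_iff in Hin as [[c0 i0] [E Hin]]. inversion E; subst. apply HLb in Hin as [Hin Hne].
        destruct (HL _ _ Hin) as [Hi Hc]. simpl in Hi. split; auto. lia.
      * apply in_flat_map in Hin as [[ca ia] [Ha Hin]]. apply in_map_iff in Hin as [[c0 i0] [E Hin]].
        inversion E; subst. apply HLb in Hin as [Hin Hne]. apply HLa in Ha as [Ha _].
        destruct (HL _ _ Hin) as [Hi Hc]. destruct (HL _ _ Ha) as [_ Hca]. simpl in Hi. split; [lia|].
        simpl. apply sg_comp; auto. apply sg_comp; auto. apply sg_inv; auto.
    + intros g Hg. destruct (Hcov g Hg) as [c [i [Hin Hci]]].
      destruct (Nat.eq_dec i 0) as [->|Hne].
      * simpl in Hci. destruct (HL _ _ Hin) as [_ Hc].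
        assert (Hcp : is_perm c) by (sgp).
        assert (Hk : K (comp (pinv c) g)) by (apply inco_iff; auto).
        assert (Hyk : D (comp y (comp (pinv c) g))) by (apply sg_comp; auto).
        destruct (Hcov _ Hyk) as [c' [i' [Hin' Hci']]].
        destruct (Nat.eq_dec i' 0) as [->|Hne'].
        -- exfalso. apply (Hyc c' Hin'). simpl in Hci'. eapply inco_trans; eauto.
           exists (pinv (comp (pinv c) g)). split. apply sg_inv; auto.
           rewrite <- comp_assoc, comp_pinv_r; auto. sgp.
        -- exists (comp (comp c (pinv y)) c'), (pred i'). split.
           ++ unfold L'. apply in_app_iff. right. apply in_flat_map. exists (c,0). split; [apply HLa; auto|].
              apply in_map_iff. exists (c',i'). split; auto. apply HLb; auto.
           ++ destruct i' as [|i']; [lia|]. simpl in Hci' |- *. destruct Hci' as [s [Hs Es]].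
              exists s. split; auto. rewrite <- !comp_assoc. rewrite <- Es.
              assert (Hyp : is_perm y) by (sgp).
              extensionality w. unfold comp. rewrite pinv_l; auto. rewrite pinv_r; auto.
      * exists c, (pred i). split.
        -- unfold L'. apply in_app_iff. left. apply in_map_iff. exists (c,i). split; auto. apply HLb; auto.
        -- destruct i; [lia|]. simpl in Hci |- *. auto.
Qed.

Theorem neumann R L : is_subgroup R ->
  (forall c K, In (c,K) L -> is_subgroup K /\ subset K R /\ R c) ->
  (forall c K, In (c,K) L -> ~ index_le R K (length L)) ->
  exists x, R x /\ forall c K, In (c,K) L -> ~ inco c K x.
Proof.
  intros HR HL HLn. apply NNPP. intro Hno.
  assert (Hcov : forall x, R x -> exists c K, In (c,K) L /\ inco c K x).
  { intros x Hx. apply NNPP. intro H. apply Hno. exists x. split; auto. intros c K Hin Hi. apply H. exists c, K; auto. }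
  clear Hno.
  set (Fin := fun K : pset => exists m, index_le R K m).
  set (F := filter (fun cK => if dec (Fin (snd cK)) then true else false) L).
  set (I := filter (fun cK => if dec (Fin (snd cK)) then false else true) L).
  assert (HF : forall c K, In (c,K) F <-> In (c,K) L /\ Fin K).
  { intros c K. unfold F. rewrite filter_In. simpl. destruct (dec (Fin K)) as [h|h]; simpl; split; intros [h1 h2]; split; auto; try discriminate; contradiction. }
  assert (HI : forall c K, In (c,K) I <-> In (c,K) L /\ ~ Fin K).
  { intros c K. unfold I. rewrite filter_In. simpl. destruct (dec (Fin K)) as [h|h]; simpl; split; intros [h1 h2]; split; auto; try discriminate; contradiction. }
  assert (HFsg : forall c K, In (c,K) F -> is_subgroup K /\ subset K R /\ exists m, index_le R K m).
  { intros c K H. apply HF in H as [H1 H2]. destruct (HL c K H1) as [? [? ?]]. auto. }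
  destruct (fin_inter R F HR HFsg) as [N HN].
  assert (HDsg : is_subgroup (DF R F)) by (apply DF_sg; auto; intros; eapply HFsg; eauto).
  assert (Fcov : forall x, R x -> exists c K, In (c,K) F /\ inco c K x).
  { intros x0 Hx0. apply NNPP. intro Hn0.
    set (D := DF R F). fold D in HN, HDsg.
    set (S := map (fun cK : perm * pset => fun g => snd cK g /\ D g) I).
    set (dflt := (idp, fun _ : perm => False) : perm * pset).
    set (di := fun i => let cK := nth i I dflt in
         match dec (exists d, D d /\ inco (fst cK) (snd cK) (comp x0 d)) with
         | left H => proj1_sig (constructive_indefinite_description _ H) | right _ => idp end).
    apply (Zlem D HDsg S) with (L := map (fun i => (di i, i)) (seq 0 (length I))).
    - intros K' HK'. unfold S in HK'. apply in_map_iff in HK' as [[c K] [<- Hin]]. simpl.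
      apply HI in Hin as [Hin HnF]. destruct (HL c K Hin) as [HK [HKR Hc]].
      split; [apply sg_inter; auto|]. split; [intros g [_ Hg]; auto|].
      intros m Hm. apply HnF. exists (N*m). apply (index_trans R D K N m HR); auto. intros g [Hg _]; auto.
    - intros c i Hin. apply in_map_iff in Hin as [j [E Hj]]. inversion E; subst. apply in_seq in Hj.
      split. unfold S; rewrite length_map; lia.
      unfold di. destruct (dec _) as [H|H]. destruct (constructive_indefinite_description _ H) as [d Hd]; simpl; apply Hd.
      apply sg_id; auto.
    - intros g Hg. assert (Hx0g : R (comp x0 g)) by (apply sg_comp; auto; destruct Hg; auto).
      destruct (Hcov _ Hx0g) as [c [K [Hin Hci]]].
      destruct (HL c K Hin) as [HK [HKR Hc]].
      destruct (dec (Fin K)) as [HFin|HnFin].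
      + exfalso. apply Hn0. exists c, K. split; [apply HF; auto|].
        eapply inco_trans; eauto. exists (pinv g). split.
        * apply sg_inv; auto. destruct Hg as [_ Hg]. apply (Hg c K). apply HF; auto.
        * rewrite <- comp_assoc, comp_pinv_r; auto. sgp.
      + assert (HinI : In (c,K) I) by (apply HI; auto).
        destruct (In_nth I (c,K) dflt HinI) as [i [Hi Ei]].
        exists (di i), i. split.
        * apply in_map_iff. exists i. split; auto. apply in_seq; lia.
        * unfold S. rewrite (nth_indep _ (fun _ : perm => False) ((fun cK : perm * pset => fun g => snd cK g /\ D g) dflt)) by (rewrite length_map; lia).
          change (fun g0 : perm => snd dflt g0 /\ D g0) with ((fun (cK : perm * pset) (g0 : perm) => snd cK g0 /\ D g0) dflt). rewrite map_nth. rewrite Ei. simpl.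
          unfold di. rewrite Ei. simpl. destruct (dec _) as [H|H].
          -- destruct (constructive_indefinite_description _ H) as [d Hd']. simpl. destruct Hd' as [Hd Hdi].
             assert (Hdp : is_perm d) by (sgp).
             assert (Hx0p : is_perm x0) by (sgp).
             apply inco_iff; auto. split; [|apply sg_comp; auto; apply sg_inv; auto].
             pose proof (inco_trans _ (comp x0 d) c (comp x0 g) K HK (inco_sym _ c K (comp x0 d) HK Hdi) Hci) as H2.
             apply inco_iff in H2; [|apply is_perm_comp; auto].
             replace (comp (pinv d) g) with (comp (pinv (comp x0 d)) (comp x0 g)); auto.
             rewrite pinv_comp by auto. extensionality w. unfold comp. rewrite pinv_l; auto.
          -- exfalso. apply H. exists g. split; auto. }
  apply (count_main Omega R (DF R F) F (length L) N); auto.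
  - intros g [Hg _]; auto.
  - intros c K Hin. pose proof Hin as Hin'. apply HF in Hin' as [HinL _]. destruct (HL c K HinL) as [HK [HKR Hc]].
    split; [auto|split; [|split; [auto|split; [auto|apply (HLn c K); auto]]]]. intros g [_ Hg]. apply (Hg c K Hin).
  - unfold F. apply filter_length_le.
Qed.

End Neu2.

Section Alg.
Variable Omega : Type.
Notation perm := (perm Omega).
Notation pset := (pset Omega).
Notation comp := (comp Omega).
Notation is_perm := (is_perm Omega).
Notation is_subgroup := (is_subgroup Omega).
Notation index_le := (index_le Omega).
Notation subset := (subset Omega).
Notation Rist := (Rist Omega).

Variable P : list perm.
Variable Om : perm -> Omega -> Prop.
Hypothesis HDC : displacement_configuration Omega P Om.

Definition UU (w : Omega) : Prop := exists a, In a P /\ Om a w.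

Variable p : perm.
Hypothesis HpP : In p P.
Hypothesis Hpp : is_perm p.

Notation B := (Om p).
Definition pB (w : Omega) : Prop := exists b, B b /\ w = p b.

Lemma F1 b : B b -> ~ UU (p b).
Proof. intros Hb [a [Ha Hab]]. destruct HDC as [_ [_ [_ C4]]]. destruct (C4 p HpP b Hb a Ha) as [H _]. auto. Qed.
Lemma F2 b : B b -> ~ UU (p (p b)).
Proof. intros Hb [a [Ha Hab]]. destruct HDC as [_ [_ [_ C4]]]. destruct (C4 p HpP b Hb a Ha) as [_ H]. auto. Qed.
Lemma BU w : B w -> UU w.
Proof. intro H; exists p; auto. Qed.
Lemma F3 z : UU z -> UU (p z) -> p z = z.
Proof. intros [a [Ha Hz]] Hpz. destruct HDC as [_ [_ [C3 _]]]. destruct (C3 p a HpP Ha) as [H|H]; auto.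
  exfalso. destruct Hpz as [a' [Ha' Hpz]]. apply (H z Hz a' Ha' Hpz). Qed.
Lemma F4 z : B (p z) -> ~ UU z.
Proof. intros Hb Hz. assert (E : p z = z) by (apply F3; auto; apply BU; auto).
  rewrite E in Hb. apply (F1 z Hb). apply BU. rewrite E; auto. Qed.
Lemma pB_not_B w : pB w -> ~ B w.
Proof. intros [b [Hb ->]] H. apply (F1 b Hb). apply BU; auto. Qed.
Lemma pB_not_U w : pB w -> ~ UU w.
Proof. intros [b [Hb ->]]. apply F1; auto. Qed.

Lemma rist_pres (G : pset) g : Rist G B g -> is_perm g -> forall w, B w -> B (g w).
Proof. intros [_ Hg] Hp w Hw. apply NNPP. intro Hn. assert (E := Hg _ Hn).
  apply (perm_inj _ g Hp) in E. rewrite E in Hn; contradiction. Qed.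
Lemma rist_pres_c (G : pset) g : Rist G B g -> is_perm g -> forall w, ~ B w -> ~ B (g w).
Proof. intros [_ Hg] Hp w Hw. rewrite Hg; auto. Qed.
Lemma rist_pinv (G : pset) g : is_subgroup G -> Rist G B g -> Rist G B (pinv g).
Proof. intros HG [Hg Hf]. split. apply sg_inv; auto. intros w Hw.
  assert (Hp : is_perm g) by sgp. rewrite <- (Hf w Hw) at 1. apply pinv_l; auto. Qed.
Lemma rist_comp (G : pset) g h : is_subgroup G -> Rist G B g -> Rist G B h -> Rist G B (comp g h).
Proof. intros HG [Hg Hf] [Hh Hf']. split. apply sg_comp; auto. intros w Hw. unfold comp. rewrite Hf'; auto. Qed.

Definition gamlike (g : perm) (c : perm) : Prop :=
  is_perm g /\ (forall w, B w -> g w = c w) /\ (forall w, ~ UU w -> g w = w) /\ (forall w, UU w -> UU (g w)).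

Lemma gl_out g c w : gamlike g c -> UU (g w) -> UU w.
Proof. intros [_ [_ [H _]]] Hw. apply NNPP. intro Hn. rewrite H in Hw; auto. Qed.

Variable G : pset.
Hypothesis HG : is_subgroup G.

Section Q.
Variables (g c q : perm).
Hypothesis Hgl : gamlike g c.
Hypothesis Hc : Rist G B c.
Hypothesis Hq : forall w, p (g w) = g (q w).

Lemma cperm : is_perm c.
Proof. destruct Hc; sgp. Qed.

Lemma Q1 w : B w -> q w = p (c w).
Proof. intro Hw. destruct Hgl as [Hgp [Hb [Ho Hu]]].
  assert (Hcw : B (c w)) by (apply (rist_pres G); auto; apply cperm).
  apply (perm_inj _ g Hgp). rewrite <- Hq, Hb by auto. rewrite Ho; auto. apply F1; auto. Qed.

Lemma Q2 b : B b -> q (p b) = p (p b).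
Proof. intro Hb. destruct Hgl as [Hgp [Hb' [Ho Hu]]].
  apply (perm_inj _ g Hgp). rewrite <- Hq. rewrite (Ho (p b)) by (apply F1; auto).
  rewrite (Ho (p (p b))) by (apply F2; auto). reflexivity. Qed.

Lemma Q3 w : B w -> q (pinv p (c w)) = w.
Proof. intro Hw. destruct Hgl as [Hgp [Hb [Ho Hu]]].
  assert (Hcw : B (c w)) by (apply (rist_pres G); auto; apply cperm).
  assert (Hz : ~ UU (pinv p (c w))) by (apply F4; rewrite pinv_r; auto).
  apply (perm_inj _ g Hgp). rewrite <- Hq. rewrite (Ho _ Hz). rewrite pinv_r by auto. rewrite Hb; auto. Qed.
End Q.

Lemma E1 g c q g' c' q' w : gamlike g c -> Rist G B c -> (forall w, p (g w) = g (q w)) -> is_perm q ->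
  gamlike g' c' -> Rist G B c' -> (forall w, p (g' w) = g' (q' w)) ->
  B w -> comp q' (pinv q) w = pinv c' (c w).
Proof.
  intros Hgl Hc Hq Hqp Hgl' Hc' Hq' Hw. unfold comp.
  assert (Hcp : is_perm c) by (destruct Hc; sgp). assert (Hcp' : is_perm c') by (destruct Hc'; sgp).
  assert (E : pinv q w = pinv p (c w)).
  { rewrite <- (Q3 g c q Hgl Hc Hq w Hw) at 1. apply pinv_l; auto. }
  rewrite E. assert (Hw' : B (pinv c' (c w))).
  { apply (rist_pres G); auto. apply rist_pinv; auto. apply is_perm_pinv; auto. apply (rist_pres G); auto. }
  rewrite <- (Q3 g' c' q' Hgl' Hc' Hq' _ Hw'). rewrite pinv_r; auto.
Qed.

Lemma onB_out (e y : perm) : is_perm e -> is_perm y -> (forall w, B w -> B (y w)) -> (forall w, ~ B w -> y w = w) ->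
  (forall w, B w -> e w = y w) -> forall w, ~ B w -> ~ B (e w).
Proof.
  intros He Hy Hyb Hyo Hey w Hw Hb.
  assert (Hb' : B (pinv y (e w))).
  { apply NNPP. intro Hn. assert (E := Hyo _ Hn). rewrite pinv_r in E; auto. rewrite E in Hb.
    (* pinv y (e w) = e w, but e w in B, contradiction *) contradiction. }
  assert (E : e (pinv y (e w)) = e w) by (rewrite Hey; auto; apply pinv_r; auto).
  apply (perm_inj _ e He) in E. rewrite E in Hb'. contradiction.
Qed.

Lemma conj_onB (e y h : perm) : is_perm e -> is_perm y -> (forall w, B w -> B (y w)) -> (forall w, ~ B w -> y w = w) ->
  (forall w, B w -> e w = y w) -> (forall w, ~ B w -> h w = w) -> (forall w, B w -> B (h w)) ->
  comp e h = comp (comp (comp y h) (pinv y)) e.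
Proof.
  intros He Hy Hyb Hyo Hey Hho Hhb. extensionality w. unfold comp.
  destruct (classic (B w)) as [Hw|Hw].
  - rewrite Hey by auto. rewrite Hey by auto. rewrite pinv_l; auto.
  - rewrite Hho by auto. pose proof (onB_out e y He Hy Hyb Hyo Hey w Hw) as Hn.
    assert (E : pinv y (e w) = e w).
    { rewrite <- (Hyo _ Hn) at 1. apply pinv_l; auto. }
    rewrite E, Hho, Hyo; auto.
Qed.

End Alg.

Section Alg2.
Variable Omega : Type.
Notation perm := (perm Omega).
Notation pset := (pset Omega).
Notation comp := (comp Omega).
Notation is_perm := (is_perm Omega).
Notation is_subgroup := (is_subgroup Omega).
Notation index_le := (index_le Omega).
Notation Rist := (Rist Omega).

Variable P : list perm.
Variable Om : perm -> Omega -> Prop.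
Hypothesis HDC : displacement_configuration Omega P Om.
Variable p : perm.
Hypothesis HpP : In p P.
Hypothesis Hpp : is_perm p.
Notation B := (Om p).
Variable G : pset.
Hypothesis HG : is_subgroup G.
Notation gl := (gamlike Omega P Om p).

Lemma rist_perm g : Rist G B g -> is_perm g.
Proof. intros [H _]; sgp. Qed.
Lemma rc g h : Rist G B g -> Rist G B h -> Rist G B (comp g h).
Proof. apply rist_comp; auto. Qed.
Lemma ri g : Rist G B g -> Rist G B (pinv g).
Proof. apply rist_pinv; auto. Qed.
Lemma rpres g : Rist G B g -> forall w, B w -> B (g w).
Proof. intros H. apply (rist_pres Omega Om p G); auto. apply rist_perm; auto. Qed.
Lemma rout g : Rist G B g -> forall w, ~ B w -> g w = w.
Proof. intros [_ H]; auto. Qed.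

Lemma norm_lemma (Hj : pset) g c q g' c' q' : is_subgroup Hj ->
  gl g c -> Rist G B c -> (forall w, p (g w) = g (q w)) -> Hj q ->
  gl g' c' -> Rist G B c' -> (forall w, p (g' w) = g' (q' w)) -> Hj q' ->
  normalizer Omega (Rist G B) (fun h => Hj h /\ Rist G B h) (comp (pinv c') c).
Proof.
  intros HHj Hgl Hc Hq Hjq Hgl' Hc' Hq' Hjq'.
  set (e := comp q' (pinv q)). set (y := comp (pinv c') c).
  assert (Hje : Hj e) by (apply sg_comp; auto; apply sg_inv; auto).
  assert (Hep : is_perm e) by sgp.
  assert (Hry : Rist G B y) by (apply rc; auto; apply ri; auto).
  assert (Hyp : is_perm y) by (apply rist_perm; auto).
  assert (Hyb : forall w, B w -> B (y w)) by (apply rpres; auto).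
  assert (Hyo : forall w, ~ B w -> y w = w) by (destruct Hry; auto).
  assert (Hqp : is_perm q) by sgp.
  assert (Hey : forall w, B w -> e w = y w).
  { intros w Hw. unfold e, y. rewrite (E1 Omega P Om HDC p HpP Hpp G HG g c q g' c' q'); auto. }
  assert (Hconj : forall h, Rist G B h -> comp e h = comp (comp (comp y h) (pinv y)) e).
  { intros h Hh. apply (conj_onB Omega Om p); auto. destruct Hh; auto.
    apply rpres; auto. }
  split; auto. intro x. split.
  - intros [h [[Hjh Hrh] Ex]].
    assert (Exx : x = comp (comp y h) (pinv y)).
    { extensionality w. unfold comp. rewrite <- (pinv_r _ y Hyp w) at 1.
      change (comp x y (pinv y w) = y (h (pinv y w))). rewrite Ex. reflexivity. }
    split.
    + assert (E2 : x = comp (comp e h) (pinv e)).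
      { rewrite Hconj by auto. rewrite <- Exx. rewrite <- comp_assoc, comp_pinv_r; auto. }
      rewrite E2. apply sg_comp; auto. apply sg_comp; auto. apply sg_inv; auto.
    + rewrite Exx. apply rc; auto. apply rc; auto. apply ri; auto.
  - intros [Hjx Hrx]. exists (comp (comp (pinv y) x) y).
    assert (Hrh : Rist G B (comp (comp (pinv y) x) y)).
    { apply rc; auto. apply rc; auto. apply ri; auto. }
    assert (Eyh : comp (comp y (comp (comp (pinv y) x) y)) (pinv y) = x).
    { extensionality w. unfold comp. rewrite pinv_r by auto. rewrite pinv_r by auto. reflexivity. }
    split; [split; auto|].
    + pose proof (Hconj _ Hrh) as Hc2. rewrite Eyh in Hc2.
      assert (E3 : comp (comp (pinv y) x) y = comp (comp (pinv e) x) e).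
      { extensionality w. pose proof (f_equal (fun k => k w) Hc2) as E. simpl in E. unfold comp in E |- *.
        rewrite <- E. rewrite pinv_l; auto. }
      rewrite E3. apply sg_comp; auto. apply sg_comp; auto. apply sg_inv; auto.
    + extensionality w. unfold comp. rewrite pinv_r; auto.
Qed.

Lemma cent_lemma (Hj : pset) g c q d q1 g2 c2 q2 : is_subgroup Hj ->
  gl g c -> Rist G B c -> (forall w, p (g w) = g (q w)) -> Hj q ->
  Rist G B d -> (forall w, p (g (d w)) = g (d (q1 w))) -> Hj q1 ->
  gl g2 c2 -> Rist G B c2 -> (forall w, p (g2 w) = g2 (q2 w)) -> Hj q2 ->
  (forall h, Hj h -> Rist G B h -> h = idp) ->
  comp (comp (pinv c) c2) d = comp d (comp (pinv c) c2).
Proof.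
  intros HHj Hgl Hc Hq Hjq Hd Hq1 Hjq1 Hgl2 Hc2 Hq2 Hjq2 Htriv.
  assert (Hqp : is_perm q) by sgp. assert (Hq1p : is_perm q1) by sgp. assert (Hq2p : is_perm q2) by sgp.
  assert (Hcp : is_perm c) by (apply rist_perm; auto).
  assert (Hdp : is_perm d) by (apply rist_perm; auto).
  assert (Hc2p : is_perm c2) by (apply rist_perm; auto).
  assert (Hdb : forall w, B w -> B (d w)) by (apply rpres; auto).
  assert (Hdo : forall w, ~ B w -> d w = w) by (destruct Hd; auto).
  assert (Hcb : forall w, B w -> B (c w)) by (apply rpres; auto).
  assert (Hgl1 : gl (comp g d) (comp c d)).
  { destruct Hgl as [Hgp [Hb [Ho Hu]]]. split; [apply is_perm_comp; auto|split; [|split]].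
    - intros w Hw. unfold comp. apply Hb; auto.
    - intros w Hw. unfold comp. rewrite Hdo. apply Ho; auto. intro HB. apply Hw. apply (BU Omega P Om p HpP); auto.
    - intros w Hw. unfold comp. apply Hu. destruct (classic (B w)); [apply (BU Omega P Om p HpP); auto|rewrite Hdo; auto]. }
  assert (Hc1 : Rist G B (comp c d)) by (apply rc; auto).
  set (e := comp q1 (pinv q)). set (f := comp (pinv q) q2). set (s := comp (pinv c) c2).
  assert (Hrs : Rist G B s) by (apply rc; auto; apply ri; auto).
  assert (Hsp : is_perm s) by (apply rist_perm; auto).
  assert (Hsb : forall w, B w -> B (s w)) by (apply rpres; auto).
  assert (Hso : forall w, ~ B w -> s w = w) by (destruct Hrs; auto).
  assert (Hje : Hj e) by (apply sg_comp; auto; apply sg_inv; auto).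
  assert (Hjf : Hj f) by (apply sg_comp; auto; apply sg_inv; auto).
  assert (Hep : is_perm e) by sgp. assert (Hfp : is_perm f) by sgp.
  assert (Hid : Rist G B (pinv d)) by (apply ri; auto).
  assert (Hidp : is_perm (pinv d)) by (apply is_perm_pinv; auto).
  assert (HeB : forall w, B w -> e w = pinv d w).
  { intros w Hw. unfold e. rewrite (E1 Omega P Om HDC p HpP Hpp G HG g c q (comp g d) (comp c d) q1); auto.
    rewrite pinv_comp by auto. unfold comp. rewrite pinv_l; auto. }
  assert (HeO : forall w, ~ B w -> ~ pB Omega Om p w -> e w = w).
  { intros w Hw Hpw. unfold e, comp. set (z := pinv q w).
    assert (Hqz : q z = w) by (apply pinv_r; auto).
    assert (Hz : ~ B z).
    { intro Hz. apply Hpw. exists (c z). split; auto. rewrite <- Hqz. apply (Q1 Omega P Om HDC p HpP G HG g c q); auto. }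
    destruct Hgl1 as [Hg1p _]. apply (perm_inj _ _ Hg1p). unfold comp. rewrite <- Hq1.
    rewrite (Hdo z) by auto. rewrite Hq. rewrite Hqz. rewrite Hdo; auto. }
  assert (HfB : forall w, B w -> f w = s w).
  { intros w Hw. unfold f, comp. rewrite (Q1 Omega P Om HDC p HpP G HG g2 c2 q2); auto.
    assert (Hsw : B (s w)) by auto.
    rewrite <- (pinv_l _ q Hqp (s w)). f_equal. rewrite (Q1 Omega P Om HDC p HpP G HG g c q); auto.
    unfold s, comp. rewrite pinv_r; auto. }
  assert (HfpB : forall w, pB Omega Om p w -> f w = w).
  { intros w [b [Hb ->]]. unfold f, comp. rewrite (Q2 Omega P Om HDC p HpP g2 c2 q2); auto.
    rewrite <- (Q2 Omega P Om HDC p HpP g c q); auto. apply pinv_l; auto. }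
  assert (HeBB : forall w, B w -> B (e w)) by (intros; rewrite HeB; auto; apply rpres; auto).
  assert (HfO : forall w, ~ B w -> ~ B (f w)).
  { apply (onB_out Omega Om p f s); auto. }
  assert (HeO2 : forall w, ~ B w -> ~ B (e w)).
  { apply (onB_out Omega Om p e (pinv d)); auto. apply rpres; auto. destruct Hid; auto. }
  set (cc := comp (comp (comp e f) (pinv e)) (pinv f)).
  set (gg := comp (comp (comp (pinv d) s) d) (pinv s)).
  assert (Hrg : Rist G B gg).
  { unfold gg. apply rc; [apply rc; [apply rc|]|]; auto; apply ri; auto. }
  assert (Ecg : cc = gg).
  { extensionality w. unfold cc, gg, comp. destruct (classic (B w)) as [Hw|Hw].
    - assert (E1' : pinv f w = pinv s w).
      { rewrite <- (pinv_l _ f Hfp (pinv s w)). f_equal. rewrite HfB. symmetry; apply pinv_r; auto.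
        apply rpres; auto. apply ri; auto. }
      assert (Hps : B (pinv s w)) by (apply rpres; auto; apply ri; auto).
      rewrite E1'. assert (E2 : pinv e (pinv s w) = d (pinv s w)).
      { rewrite <- (pinv_l _ e Hep (d (pinv s w))). f_equal. rewrite HeB; auto. rewrite pinv_l; auto. }
      rewrite E2. rewrite HfB by auto. rewrite HeB; auto.
    - assert (Hgo : gg w = w).
      { destruct Hrg as [_ Ho]. apply Ho; auto. }
      unfold gg, comp in Hgo. rewrite Hgo.
      set (w1 := pinv f w). assert (Hfw1 : f w1 = w) by (apply pinv_r; auto).
      assert (Hw1 : ~ B w1) by (intro H1; apply Hw; rewrite <- Hfw1; rewrite HfB; auto).
      set (w2 := pinv e w1). assert (Hew2 : e w2 = w1) by (apply pinv_r; auto).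
      assert (Hw2 : ~ B w2) by (intro H2; apply Hw1; rewrite <- Hew2; apply HeBB; auto).
      destruct (classic (pB Omega Om p w1)) as [Hp1|Hp1].
      + assert (Ew : w = w1) by (rewrite <- Hfw1; apply HfpB; auto).
        destruct (classic (pB Omega Om p w2)) as [Hp2|Hp2].
        * rewrite HfpB by auto. rewrite Hew2. auto.
        * exfalso. rewrite HeO in Hew2 by auto. rewrite Hew2 in Hp2. contradiction.
      + assert (E2 : w2 = w1) by (apply (perm_inj _ e Hep); rewrite Hew2; symmetry; apply HeO; auto).
        rewrite E2, Hfw1. apply HeO; auto. intro Hpw. apply Hp1.
        assert (Ew : w1 = w) by (apply (perm_inj _ f Hfp); rewrite Hfw1; symmetry; apply HfpB; auto).
        rewrite Ew; auto. }
  assert (Hjc : Hj cc).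
  { unfold cc. apply sg_comp; auto. apply sg_comp; auto. apply sg_comp; auto. apply sg_inv; auto. apply sg_inv; auto. }
  assert (Eg : gg = idp) by (apply Htriv; [rewrite <- Ecg; auto|auto]).
  extensionality w. unfold gg in Eg. unfold comp.
  assert (E := f_equal (fun k => k (s w)) Eg). simpl in E. unfold comp, idp in E.
  rewrite pinv_l in E by auto. apply (f_equal d) in E. rewrite pinv_r in E by auto. exact E.
Qed.

Lemma cent_index M d : Rist G B d -> d <> idp ->
  (forall g, FC_le Omega M (Rist G B) g <-> g = idp) ->
  ~ index_le (Rist G B) (fun s => Rist G B s /\ comp s d = comp d s) M.
Proof.
  intros Hd Hne HFC [l [Hl [HlR Hlc]]]. apply Hne. apply HFC. split; auto.
  exists (map (fun t => comp (comp t d) (pinv t)) l). split. rewrite length_map; auto.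
  intros y [k [Hk Ey]]. destruct (Hlc k Hk) as [t [s [Ht [[Hs Ecs] ->]]]].
  apply in_map_iff. exists t. split; auto.
  assert (Htp : is_perm t) by (apply rist_perm; auto). assert (Hsp : is_perm s) by (apply rist_perm; auto).
  assert (Hkp : is_perm (comp t s)) by (apply is_perm_comp; auto).
  extensionality w. symmetry. rewrite <- (pinv_r _ _ Hkp w) at 1.
  pose proof (f_equal (fun k => k (pinv (comp t s) w)) Ey) as E. simpl in E.
  rewrite pinv_comp in E by auto. rewrite pinv_comp by auto. unfold comp in E |- *. rewrite E.
  pose proof (f_equal (fun k => k (pinv s (pinv t w))) Ecs) as E2. unfold comp in E2. rewrite E2.
  rewrite pinv_r by auto. reflexivity.
Qed.

End Alg2.

Section Grid.
Variable X : Type.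

Fixpoint grid (Us : list (list X)) : list (list X) :=
  match Us with [] => [[]] | U :: Us' => flat_map (fun x => map (cons x) (grid Us')) U end.

Lemma grid_in Us t x0 : In t (grid Us) -> length t = length Us /\ forall i, i < length Us -> In (nth i t x0) (nth i Us []).
Proof.
  revert t. induction Us as [|U Us IH]; intros t Ht; simpl in *.
  - destruct Ht as [<-|[]]. simpl; split; auto; intros; lia.
  - apply in_flat_map in Ht as [x [Hx Ht]]. apply in_map_iff in Ht as [t' [<- Ht']].
    destruct (IH t' Ht') as [H1 H2]. simpl. split; [lia|]. intros [|i] Hi; simpl; auto. apply H2; lia.
Qed.

Lemma grid_length Us s : (forall U, In U Us -> length U = s) -> length (grid Us) = s ^ length Us.
Proof.
  induction Us as [|U Us IH]; intros H; simpl; auto.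
  rewrite length_flat_map.
  assert (E : forall l : list X, list_sum (map (fun x => length (map (cons x) (grid Us))) l) = length l * s ^ length Us).
  { intro l. induction l as [|a l IHl]; simpl; auto. rewrite length_map, IH by (intros; apply H; simpl; auto). lia. }
  rewrite E. rewrite (H U (or_introl eq_refl)). simpl. lia.
Qed.

Lemma bcount_sum {A} (P : A -> Prop) l : bcount P l = list_sum (map (fun t => if dec (P t) then 1 else 0) l).
Proof. induction l as [|a l IH]; simpl; auto. rewrite bcount_cons, IH. reflexivity. Qed.

Lemma bcount_app {A} (P : A -> Prop) l1 l2 : bcount P (l1 ++ l2) = bcount P l1 + bcount P l2.
Proof. unfold bcount. rewrite filter_app, length_app. reflexivity. Qed.

Lemma bcount_flat_map {A C} (P : A -> Prop) (f : C -> list A) l :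
  bcount P (flat_map f l) = list_sum (map (fun x => bcount P (f x)) l).
Proof. induction l as [|a l IH]; simpl; auto. rewrite bcount_app, IH. reflexivity. Qed.

Lemma bcount_map_cons (P : list X -> Prop) x T : bcount P (map (cons x) T) = bcount (fun t => P (x :: t)) T.
Proof. induction T as [|a T IH]; simpl; auto. rewrite !bcount_cons, IH. reflexivity. Qed.

Lemma sum_exchange {A C} (Q : A -> C -> Prop) (U : list A) (T : list C) :
  list_sum (map (fun x => bcount (Q x) T) U) = list_sum (map (fun t => bcount (fun x => Q x t) U) T).
Proof.
  induction U as [|a U IH]; simpl.
  - induction T; simpl; auto.
  - rewrite IH. rewrite bcount_sum.
    assert (E : forall T', list_sum (map (fun t => bcount (fun x => Q x t) (a :: U)) T') =
      list_sum (map (fun t => if dec (Q a t) then 1 else 0) T') + list_sum (map (fun t => bcount (fun x => Q x t) U) T')).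
    { induction T' as [|b T' IHT]; simpl; auto. rewrite bcount_cons, IHT. lia. }
    rewrite E. reflexivity.
Qed.

Lemma bcount_le1 {A} (P : A -> Prop) U : NoDup U -> (forall x y, In x U -> In y U -> x <> y -> P x -> P y -> False) ->
  bcount P U <= 1.
Proof.
  induction U as [|a U IH]; intros Hn Hc; simpl; [unfold bcount; simpl; lia|].
  inversion Hn; subst. rewrite bcount_cons. destruct (dec (P a)) as [Ha|Ha].
  - assert (bcount P U = 0).
    { unfold bcount. destruct (filter _ U) eqn:E; auto. exfalso.
      assert (Hin : In a0 (filter (fun x => if dec (P x) then true else false) U)) by (rewrite E; simpl; auto).
      apply filter_In in Hin as [Hin HP]. destruct (dec (P a0)); [|discriminate].
      apply (Hc a a0); simpl; auto. intro; subst; contradiction. }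
    lia.
  - apply IH; auto. intros x y Hx Hy; apply Hc; simpl; auto.
Qed.

Lemma sum_le_const {A} (f : A -> nat) l k : (forall x, In x l -> f x <= k) -> list_sum (map f l) <= length l * k.
Proof. induction l as [|a l IH]; intros H; simpl; auto. specialize (H a (or_introl eq_refl)) as H1.
  specialize (IH (fun x Hx => H x (or_intror Hx))). lia. Qed.

Lemma grid_piece (x0 : X) Us s d (A : list X -> Prop) :
  (forall U, In U Us -> length U = s /\ NoDup U) -> d < length Us ->
  (forall t t', In t (grid Us) -> In t' (grid Us) -> (forall i, i <> d -> nth i t x0 = nth i t' x0) -> t <> t' ->
     A t -> A t' -> False) ->
  bcount A (grid Us) <= s ^ (length Us - 1).
Proof.
  revert d A. induction Us as [|U Us IH]; intros d A HU Hd Hg; simpl in Hd; [lia|].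
  simpl grid. rewrite bcount_flat_map.
  assert (E : forall x, bcount A (map (cons x) (grid Us)) = bcount (fun t => A (x :: t)) (grid Us))
    by (intro; apply bcount_map_cons).
  rewrite (map_ext _ _ E). destruct (HU U (or_introl eq_refl)) as [HUl HUn].
  destruct d as [|d].
  - rewrite (sum_exchange (fun x t => A (x :: t))). simpl length. replace (S (length Us) - 1) with (length Us) by lia.
    rewrite <- (grid_length Us s) by (intros; apply HU; simpl; auto).
    replace (length (grid Us)) with (length (grid Us) * 1) by lia. apply sum_le_const.
    intros t Ht. apply bcount_le1; auto. intros x y Hx Hy Hne HA1 HA2.
    apply (Hg (x :: t) (y :: t)); auto.
    + simpl. apply in_flat_map. exists x. split; auto. apply in_map; auto.
    + simpl. apply in_flat_map. exists y. split; auto. apply in_map; auto.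
    + intros [|i] Hi; simpl; auto. lia.
    + intro E'; inversion E'; auto.
  - assert (Hb : forall x, In x U -> bcount (fun t => A (x :: t)) (grid Us) <= s ^ (length Us - 1)).
    { intros x Hx. apply (IH d); auto. intros; apply HU; simpl; auto. lia.
      intros t t' Ht Ht' Hagree Hne HA1 HA2. apply (Hg (x :: t) (x :: t')); auto.
      + simpl. apply in_flat_map. exists x. split; auto. apply in_map; auto.
      + simpl. apply in_flat_map. exists x. split; auto. apply in_map; auto.
      + intros [|i] Hi; simpl; auto; apply Hagree; lia.
      + intro E'; inversion E'; auto. }
    eapply Nat.le_trans. apply sum_le_const. exact Hb. rewrite HUl. simpl length.
    destruct (length Us) as [|m] eqn:Em; [lia|]. replace (S (S m) - 1) with (S m) by lia.
    replace (S m - 1) with m by lia. simpl. lia.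
Qed.

Lemma grid_main (x0 : X) Us s (pieces : list (nat * (list X -> Prop))) :
  (forall U, In U Us -> length U = s /\ NoDup U) -> length pieces < s ->
  (forall d A, In (d, A) pieces -> d < length Us /\
     forall t t', In t (grid Us) -> In t' (grid Us) -> (forall i, i <> d -> nth i t x0 = nth i t' x0) -> t <> t' ->
     A t -> A t' -> False) ->
  exists t, In t (grid Us) /\ forall d A, In (d, A) pieces -> ~ A t.
Proof.
  intros HU Hs Hp. apply NNPP. intro Hno.
  assert (Hcov : forall t, In t (grid Us) -> exists b, In b pieces /\ snd b t).
  { intros t Ht. apply NNPP. intro H. apply Hno. exists t. split; auto. intros d A Hin HA. apply H. exists (d, A); auto. }
  pose proof (union_bound (grid Us) pieces (fun b t => snd b t) Hcov) as UB.
  rewrite (grid_length Us s) in UB by (intros; apply HU; auto).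
  destruct pieces as [|pc pcs].
  - simpl in UB. assert (1 <= s ^ length Us) by (apply Nat.neq_0_lt_0, Nat.pow_nonzero; simpl in Hs; lia). lia.
  - destruct pc as [d0 A0]. destruct (Hp d0 A0 (or_introl eq_refl)) as [Hd0 _].
    assert (SB : list_sum (map (fun b => bcount (snd b) (grid Us)) ((d0, A0) :: pcs)) <= length ((d0,A0) :: pcs) * s ^ (length Us - 1)).
    { apply sum_le_const. intros [d A] Hin. destruct (Hp d A Hin) as [Hd Hg]. apply (grid_piece x0 Us s d A); auto. }
    destruct (length Us) as [|m] eqn:Em; [lia|]. replace (S m - 1) with m in SB by lia.
    simpl in UB. simpl in SB. simpl in Hs.
    assert (1 <= s ^ m) by (apply Nat.neq_0_lt_0, Nat.pow_nonzero; lia).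
    set (Y := s ^ m) in *. set (Z := list_sum _) in *. change (bcount (fun t : list X => A0 t) (grid Us)) with (bcount A0 (grid Us)) in UB. nia.
Qed.

End Grid.

Section Blocks.
Variable Omega : Type.
Notation perm := (perm Omega).
Notation pset := (pset Omega).
Notation comp := (comp Omega).
Notation is_perm := (is_perm Omega).
Notation is_subgroup := (is_subgroup Omega).
Notation index_le := (index_le Omega).
Notation Rist := (Rist Omega).

Variable P : list perm.
Variable Om : perm -> Omega -> Prop.
Hypothesis HDC : displacement_configuration Omega P Om.
Variable G : pset.
Hypothesis HG : is_subgroup G.

Definition disj_reps (reps : list perm) : Prop :=
  forall i j, i < length reps -> j < length reps -> i <> j -> forall x, Om (nth i reps idp) x -> Om (nth j reps idp) x -> False.

Lemma reps_exist_gen L : (forall a, In a L -> In a P) -> exists reps, (forall r, In r reps -> In r P) /\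
  (forall a, In a L -> exists i, i < length reps /\ forall x, Om a x <-> Om (nth i reps idp) x) /\ disj_reps reps.
Proof.
  induction L as [|a L IH]; intros HL.
  - exists []. repeat split; simpl; try tauto. intros i j Hi; simpl in Hi; lia.
  - destruct IH as [reps [H1 [H2 H3]]]. { intros; apply HL; simpl; auto. }
    destruct (classic (exists i, i < length reps /\ forall x, Om a x <-> Om (nth i reps idp) x)) as [Hex|Hno].
    + exists reps. repeat split; auto. intros a' [E|Ha']; [subst a'; auto|auto].
    + exists (reps ++ [a]). repeat split.
      * intros r' Hr. apply in_app_iff in Hr as [Hr|[<-|[]]]; auto. apply HL; simpl; auto.
      * intros a' [E|Ha'].
        -- subst a'. exists (length reps). rewrite length_app; simpl. split; [lia|]. rewrite nth_middle. tauto.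
        -- destruct (H2 a' Ha') as [i [Hi Hx]]. exists i. rewrite length_app. split; [lia|]. rewrite app_nth1; auto.
      * intros i j Hi Hj Hij x Hxi Hxj. rewrite length_app in Hi, Hj; simpl in Hi, Hj.
        assert (HC1 := proj1 (proj2 HDC)).
        assert (Hgen : forall i, i < length reps -> Om (nth i reps idp) x -> Om a x -> False).
        { intros k Hk Hk1 Hk2. apply Hno. exists k. split; auto.
          assert (Hr : In (nth k reps idp) P) by (apply H1, nth_In; auto).
          destruct (HC1 a (nth k reps idp) (HL a (or_introl eq_refl)) Hr) as [E|E]; auto.
          exfalso; apply (E x); auto. }
        destruct (Nat.eq_dec i (length reps)) as [->|Hi'];
        destruct (Nat.eq_dec j (length reps)) as [->|Hj'].
        -- lia.
        -- rewrite nth_middle in Hxi. rewrite app_nth1 in Hxj by lia. apply (Hgen j); auto; lia.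
        -- rewrite nth_middle in Hxj. rewrite app_nth1 in Hxi by lia. apply (Hgen i); auto; lia.
        -- rewrite app_nth1 in Hxi, Hxj by lia. apply (H3 i j) with x; auto; lia.
Qed.

Definition gam (t : list perm) : perm := fold_right comp idp t.

Lemma rist_pres_gen (Bs : Omega -> Prop) g : Rist G Bs g -> is_perm g -> forall w, Bs w -> Bs (g w).
Proof. intros [_ Hg] Hp w Hw. apply NNPP. intro Hn. assert (E := Hg _ Hn).
  apply (perm_inj _ g Hp) in E. rewrite E in Hn; contradiction. Qed.

Definition valid (reps t : list perm) : Prop :=
  length t = length reps /\ forall i, i < length reps -> Rist G (Om (nth i reps idp)) (nth i t idp).

Lemma gam_spec reps t : disj_reps reps -> valid reps t ->
  (forall i, i < length reps -> forall w, Om (nth i reps idp) w -> gam t w = nth i t idp w) /\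
  (forall w, (forall i, i < length reps -> ~ Om (nth i reps idp) w) -> gam t w = w).
Proof.
  revert t. induction reps as [|r reps IH]; intros t Hd [Hl Hv].
  - destruct t; simpl in *; [|lia]. split; [intros; lia|reflexivity].
  - destruct t as [|x t]; simpl in Hl; [lia|]. injection Hl as Hl.
    assert (Hd' : disj_reps reps).
    { intros i j Hi Hj Hij w H1 H2. apply (Hd (S i) (S j)) with w; simpl; auto; lia. }
    assert (Hv' : valid reps t).
    { split; auto. intros i Hi. apply (Hv (S i)); simpl; lia. }
    destruct (IH t Hd' Hv') as [IH1 IH2].
    assert (Hx : Rist G (Om r) x) by (apply (Hv 0); simpl; lia).
    assert (Hxp : is_perm x) by (destruct Hx; sgp).
    split.
    + intros [|i] Hi w Hw; simpl in *.
      * unfold comp. rewrite IH2; auto. intros i Hi' Hw'. apply (Hd 0 (S i)) with w; simpl; auto; lia.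
      * unfold comp. assert (Hri : Rist G (Om (nth i reps idp)) (nth i t idp)) by (apply Hv'; lia).
        assert (Hrip : is_perm (nth i t idp)) by (destruct Hri; sgp).
        rewrite (IH1 i ltac:(lia) w Hw).
        destruct Hx as [_ Hxo]. apply Hxo. intro Hr.
        apply (Hd 0 (S i)) with (nth i t idp w); simpl; auto; try lia.
        apply (rist_pres_gen _ (nth i t idp)); auto.
    + intros w Hw. simpl. unfold comp. destruct Hx as [_ Hxo].
      assert (E : gam t w = w) by (apply IH2; intros i Hi; apply (Hw (S i)); simpl; lia).
      rewrite E. apply Hxo. apply (Hw 0). simpl; lia.
Qed.

Lemma gam_G reps t : valid reps t -> G (gam t).
Proof.
  revert t. induction reps as [|r reps IH]; intros t [Hl Hv].
  - destruct t; simpl in *; [apply sg_id; auto|lia].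
  - destruct t as [|x t]; simpl in Hl; [lia|]. simpl. apply sg_comp; auto.
    + destruct (Hv 0) as [H _]; simpl; auto; lia.
    + apply IH. split; [lia|]. intros i Hi. apply (Hv (S i)). simpl; lia.
Qed.

Lemma gam_perm reps t : valid reps t -> is_perm (gam t).
Proof. intro H. apply (sg_perm _ G); auto. eapply gam_G; eauto. Qed.

End Blocks.

Section Blocks2.
Variable Omega : Type.
Notation perm := (perm Omega).
Notation pset := (pset Omega).
Notation comp := (comp Omega).
Notation is_perm := (is_perm Omega).
Notation is_subgroup := (is_subgroup Omega).
Notation index_le := (index_le Omega).
Notation Rist := (Rist Omega).

Variable P : list perm.
Variable Om : perm -> Omega -> Prop.
Hypothesis HDC : displacement_configuration Omega P Om.
Variable G : pset.
Hypothesis HG : is_subgroup G.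
Variable reps : list perm.
Hypothesis Hreps1 : forall r, In r reps -> In r P.
Hypothesis Hreps2 : forall a, In a P -> exists i, i < length reps /\ forall x, Om a x <-> Om (nth i reps idp) x.
Hypothesis Hreps3 : disj_reps Omega Om reps.

Notation valid := (valid Omega Om G reps).

Lemma valid_rist t i : valid t -> i < length reps -> Rist G (Om (nth i reps idp)) (nth i t idp).
Proof. intros [_ H] Hi; auto. Qed.

Lemma valid_perm t i : valid t -> i < length reps -> is_perm (nth i t idp).
Proof. intros H Hi. destruct (valid_rist t i H Hi) as [H1 _]. sgp. Qed.

Lemma gam_gl t p d : valid t -> d < length reps -> Om p = Om (nth d reps idp) ->
  gamlike Omega P Om p (gam Omega t) (nth d t idp).
Proof.
  intros Hv Hd Ep. destruct (gam_spec Omega Om G HG reps t Hreps3 Hv) as [H1 H2].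
  split; [|split; [|split]].
  - apply (gam_perm Omega Om G HG reps); auto.
  - intros w Hw. apply H1; auto. rewrite <- Ep; auto.
  - intros w Hw. apply H2. intros i Hi Hi'. apply Hw. exists (nth i reps idp). split; auto. apply Hreps1, nth_In; auto.
  - intros w [a [Ha Hw]]. destruct (Hreps2 a Ha) as [i [Hi Hx]]. apply Hx in Hw.
    rewrite (H1 i Hi w Hw). exists (nth i reps idp). split. apply Hreps1, nth_In; auto.
    apply (rist_pres_gen Omega G _ (nth i t idp)); auto. apply valid_rist; auto. apply valid_perm; auto.
Qed.

Lemma gam_update t t' d : valid t -> valid t' -> d < length reps ->
  (forall i, i <> d -> nth i t idp = nth i t' idp) ->
  gam Omega t' = comp (gam Omega t) (comp (pinv (nth d t idp)) (nth d t' idp)).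
Proof.
  intros Hv Hv' Hd Hag.
  destruct (gam_spec Omega Om G HG reps t Hreps3 Hv) as [H1 H2].
  destruct (gam_spec Omega Om G HG reps t' Hreps3 Hv') as [H1' H2'].
  assert (Hr := valid_rist t d Hv Hd). assert (Hr' := valid_rist t' d Hv' Hd).
  assert (Hp := valid_perm t d Hv Hd). assert (Hp' := valid_perm t' d Hv' Hd).
  extensionality w. unfold comp. destruct (classic (Om (nth d reps idp) w)) as [Hw|Hw].
  - rewrite (H1' d Hd w Hw). assert (Hw2 : Om (nth d reps idp) (pinv (nth d t idp) (nth d t' idp w))).
    { apply (rist_pres_gen Omega G _ (pinv (nth d t idp))). apply (rist_pinv Omega (fun _ => Om (nth d reps idp) ) idp); auto.
      apply is_perm_pinv; auto. apply (rist_pres_gen Omega G _ (nth d t' idp)); auto. }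
    rewrite (H1 d Hd _ Hw2). rewrite pinv_r; auto.
  - destruct Hr as [_ Ho]. destruct Hr' as [_ Ho']. rewrite (Ho' w Hw).
    assert (E : pinv (nth d t idp) w = w) by (rewrite <- (Ho w Hw) at 1; apply pinv_l; auto).
    rewrite E. destruct (classic (exists i, i < length reps /\ Om (nth i reps idp) w)) as [[i [Hi Hwi]]|Hno].
    + rewrite (H1 i Hi w Hwi), (H1' i Hi w Hwi). rewrite Hag; auto. intro; subst; contradiction.
    + rewrite H2, H2'; auto; intros i Hi Hwi; apply Hno; eauto.
Qed.

Lemma rist_sg Bs : is_subgroup (Rist G Bs).
Proof.
  split; [|split; [|split]].
  - intros f [Hf _]; sgp.
  - split; [apply sg_id; auto|reflexivity].
  - intros f g [H1 H2] [H3 H4]. split; [apply sg_comp; auto|]. intros x Hx. unfold comp. rewrite H4, H2; auto.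
  - intros f [H1 H2]. exists (pinv f). assert (Hp : is_perm f) by sgp. split; [split|].
    + apply sg_inv; auto.
    + intros x Hx. rewrite <- (H2 x Hx) at 1. apply pinv_l; auto.
    + split; intro x; [apply pinv_l|apply pinv_r]; auto.
Qed.

Lemma inter_sg (A B : pset) : is_subgroup A -> is_subgroup B -> is_subgroup (fun h => A h /\ B h).
Proof. apply sg_inter. Qed.

Lemma triv_sg : is_subgroup (fun g : perm => g = idp).
Proof.
  split; [|split; [|split]].
  - intros f ->. apply is_perm_id.
  - reflexivity.
  - intros f g -> ->. reflexivity.
  - intros f ->. exists idp. split; auto.
Qed.

Lemma cent_sg Bs d : is_subgroup (fun s => Rist G Bs s /\ comp s d = comp d s).
Proof.
  assert (HR := rist_sg Bs).
  split; [|split; [|split]].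
  - intros f [Hf _]; sgp.
  - split; [apply sg_id; auto|reflexivity].
  - intros f g [H1 H2] [H3 H4]. split; [apply sg_comp; auto|].
    rewrite <- comp_assoc, H4, comp_assoc, H2. reflexivity.
  - intros f [H1 H2]. assert (Hp : is_perm f) by sgp. exists (pinv f). split; [split|].
    + apply sg_inv; auto.
    + extensionality w. unfold comp. apply (perm_inj _ f Hp). rewrite pinv_r by auto.
      pose proof (f_equal (fun k => k (pinv f w)) H2) as E. unfold comp in E. rewrite pinv_r in E by auto.
      rewrite E; reflexivity.
    + split; intro x; [apply pinv_l|apply pinv_r]; auto.
Qed.

Lemma norm_sg (K N : pset) : is_subgroup K -> (forall f, N f -> is_perm f) ->
  is_subgroup (normalizer Omega K N).
Proof.
  intros HK HNp. split; [|split; [|split]].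
  - intros f [Hf _]; sgp.
  - split; [apply sg_id; auto|]. intro x. split.
    + intros [h [Hh E]]. replace x with h; auto.
    + intro Hx. exists x. split; auto.
  - intros f g [Hf Nf] [Hg Ng]. assert (Hfp : is_perm f) by sgp. assert (Hgp : is_perm g) by sgp.
    split; [apply sg_comp; auto|]. intro x. split.
    + intros [h [Hh E]].
      assert (Hh' : N (comp (comp g h) (pinv g))).
      { apply Ng. exists h. split; auto. extensionality w. unfold comp. rewrite pinv_l; auto. }
      apply Nf. exists (comp (comp g h) (pinv g)). split; auto.
      extensionality w. unfold comp.
      pose proof (f_equal (fun k => k (pinv g w)) E) as E'. unfold comp in E'. rewrite pinv_r in E' by auto. exact E'.
    + intro Hx. destruct (proj2 (Nf x) Hx) as [h1 [Hh1 E1]]. destruct (proj2 (Ng h1) Hh1) as [h2 [Hh2 E2]].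
      exists h2. split; auto. extensionality w. unfold comp.
      pose proof (f_equal (fun k => k (g w)) E1) as E1'. unfold comp in E1'. rewrite E1'.
      pose proof (f_equal (fun k => k w) E2) as E2'. unfold comp in E2'. rewrite E2'. reflexivity.
  - intros f [Hf Nf]. assert (Hfp : is_perm f) by sgp. exists (pinv f). split; [split|].
    + apply sg_inv; auto.
    + intro x. split.
      * intros [h [Hh E]].
        destruct (proj2 (Nf h) Hh) as [x' [Hx' E']].
        replace x with x'; auto. extensionality w.
        pose proof (f_equal (fun k => k (f w)) E) as E1. unfold comp in E1. rewrite pinv_l in E1 by auto.
        pose proof (f_equal (fun k => k w) E') as E2. unfold comp in E2.
        rewrite E1, E2, pinv_l; auto.
      * intro Hx. exists (comp (comp f x) (pinv f)). split.
        -- apply Nf. exists x. split; auto. extensionality w. unfold comp. rewrite pinv_l; auto.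
        -- extensionality w. unfold comp. rewrite pinv_l; auto.
    + split; intro x; [apply pinv_l|apply pinv_r]; auto.
Qed.

End Blocks2.

Lemma filter_partition {A} (f : A -> bool) l : length (filter f l) + length (filter (fun x => negb (f x)) l) = length l.
Proof. induction l as [|a l IH]; simpl; auto. destruct (f a); simpl; lia. Qed.

Theorem theorem3p17 (Omega : Type) (n : nat) (H : nat -> pset Omega) (G : pset Omega)
  (P : list (perm Omega)) (r : nat) (Om : perm Omega -> Omega -> Prop) :
  1 <= n ->
  (forall j, j < n -> is_subgroup Omega (H j)) ->
  is_subgroup Omega G ->
  confined Omega n H G ->
  NoDup P ->
  confining_subset Omega n H G P ->
  r = length P ->
  displacement_configuration Omega P Om ->
  (forall s, In s P ->
     (exists g, Rist Omega G (Om s) g /\ g <> idp) /\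
     (forall g, FC_le Omega (n * r) (Rist Omega G (Om s)) g <-> g = idp)) ->
  exists rho, In rho P /\ exists k, k < n /\
    exists N : pset Omega, is_subgroup Omega N /\
      subset Omega N (H k) /\ subset Omega N (Rist Omega G (Om rho)) /\
      (exists g, N g /\ g <> idp) /\
      index_le Omega (Rist Omega G (Om rho))
        (normalizer Omega (Rist Omega G (Om rho)) N) (n * r).
Proof.
  intros Hn HH HG _ HND [HPp Hconf] Hr HDC Hrist.
  apply NNPP. intro Hno.
  set (M := n * r).
  assert (Hbad : forall p j, In p P -> j < n -> (exists g, H j g /\ Rist Omega G (Om p) g /\ g <> idp) ->
      ~ index_le Omega (Rist Omega G (Om p)) (normalizer Omega (Rist Omega G (Om p)) (fun h => H j h /\ Rist Omega G (Om p) h)) M).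
  { intros p j Hp Hj [g [Hg1 [Hg2 Hg3]]] Hidx. apply Hno. exists p. split; auto. exists j. split; auto.
    exists (fun h => H j h /\ Rist Omega G (Om p) h). split; [apply sg_inter; auto; apply rist_sg; auto|].
    split; [intros f [Hf _]; auto|]. split; [intros f [_ Hf]; auto|]. split; [exists g; auto|]. exact Hidx. }
  destruct (reps_exist_gen Omega P Om HDC P (fun a H => H)) as [reps [Hr1 [Hr2 Hr3]]].
  set (m := length reps).
  set (idx := fun p : perm Omega => match dec (exists i, i < m /\ Om p = Om (nth i reps idp)) with
                 | left Hx => proj1_sig (constructive_indefinite_description _ Hx) | right _ => 0 end).
  assert (Hidx : forall p, In p P -> idx p < m /\ Om p = Om (nth (idx p) reps idp)).
  { intros p Hp. unfold idx. destruct (dec _) as [Hx|Hx].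
    - destruct (constructive_indefinite_description _ Hx) as [i Hi]. simpl. exact Hi.
    - exfalso. apply Hx. destruct (Hr2 p Hp) as [i [Hi Hiff]]. exists i. split; auto.
      extensionality w. apply propositional_extensionality. auto. }
  set (valid := valid Omega Om G reps).
  set (A := fun (j : nat) (p : perm Omega) (g : perm Omega) => conj_set Omega g (H j) p).
  assert (HAq : forall j p g, A j p g -> exists q, H j q /\ forall w, p (g w) = g (q w)).
  { intros j p g [q [Hq E]]. exists q. split; auto. intro w. exact (f_equal (fun k => k w) E). }
  assert (Hvr : forall t p, valid t -> In p P -> Rist Omega G (Om p) (nth (idx p) t idp)).
  { intros t p Hv Hp. destruct (Hidx p Hp) as [Hi Ep]. rewrite Ep. apply valid_rist; auto. }
  assert (Hvg : forall t p, valid t -> In p P -> gamlike Omega P Om p (gam Omega t) (nth (idx p) t idp)).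
  { intros t p Hv Hp. destruct (Hidx p Hp) as [Hi Ep]. apply (gam_gl Omega P Om G HG reps); auto. }
  set (PL := list_prod (seq 0 n) P).
  assert (HPL : forall j p, In (j,p) PL <-> j < n /\ In p P).
  { intros j p. unfold PL. rewrite in_prod_iff, in_seq. split; intros [? ?]; split; auto; lia. }
  set (isGraph := fun jp : nat * perm Omega => ~ exists t d, valid t /\ A (fst jp) (snd jp) (gam Omega t) /\
        Rist Omega G (Om (snd jp)) d /\ d <> idp /\ A (fst jp) (snd jp) (comp Omega (gam Omega t) d)).
  set (CDp := fun (jp : nat * perm Omega) (cK : perm Omega * pset Omega) =>
        is_subgroup Omega (snd cK) /\ subset Omega (snd cK) (Rist Omega G (Om (snd jp))) /\
        Rist Omega G (Om (snd jp)) (fst cK) /\ ~ index_le Omega (Rist Omega G (Om (snd jp))) (snd cK) M /\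
        forall t, valid t -> A (fst jp) (snd jp) (gam Omega t) -> inco (fst cK) (snd cK) (nth (idx (snd jp)) t idp)).
  assert (Hcd : forall jp, In jp PL -> ~ isGraph jp -> exists cK, CDp jp cK).
  { intros [j p] Hjp Hng. apply HPL in Hjp as [Hj Hp]. unfold isGraph in Hng. simpl in Hng.
    apply NNPP in Hng. destruct Hng as [t0 [d [Hv0 [HA0 [Hd [Hdne HA1]]]]]].
    destruct (HPp p Hp) as [Hpp _].
    destruct (HAq _ _ _ HA0) as [q0 [Hq0 Eq0]].
    assert (HR := rist_sg Omega G HG (Om p)).
    destruct (classic (exists g, H j g /\ Rist Omega G (Om p) g /\ g <> idp)) as [Hnt|Htr].
    - exists (nth (idx p) t0 idp, normalizer Omega (Rist Omega G (Om p)) (fun h => H j h /\ Rist Omega G (Om p) h)).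
      unfold CDp; simpl. split; [apply norm_sg; auto; intros f [Hf _]; apply (sg_perm _ (H j)); auto|].
      split; [intros f [Hf _]; auto|]. split; [apply Hvr; auto|]. split; [apply Hbad; auto|].
      intros t Hv HAt. destruct (HAq _ _ _ HAt) as [q [Hq Eq]].
      exists (comp Omega (pinv (nth (idx p) t0 idp)) (nth (idx p) t idp)). split.
      + apply (norm_lemma Omega P Om HDC p Hp Hpp G HG (H j) (gam Omega t) (nth (idx p) t idp) q (gam Omega t0) (nth (idx p) t0 idp) q0); auto.
      + assert (Hpe : is_perm Omega (nth (idx p) t0 idp)) by (destruct (Hvr t0 p Hv0 Hp); sgp).
        rewrite comp_assoc, comp_pinv_r; auto.
    - exists (nth (idx p) t0 idp, fun s => Rist Omega G (Om p) s /\ comp Omega s d = comp Omega d s).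
      unfold CDp; simpl. split; [apply cent_sg; auto|]. split; [intros f [Hf _]; auto|].
      split; [apply Hvr; auto|]. split; [apply (cent_index Omega Om p G HG M d Hd Hdne); apply (Hrist p Hp)|].
      intros t Hv HAt. destruct (HAq _ _ _ HAt) as [q [Hq Eq]]. destruct (HAq _ _ _ HA1) as [q1 [Hq1 Eq1]].
      assert (Hpe : is_perm Omega (nth (idx p) t0 idp)) by (destruct (Hvr t0 p Hv0 Hp); sgp).
      exists (comp Omega (pinv (nth (idx p) t0 idp)) (nth (idx p) t idp)). split; [split|].
      + apply rist_comp; auto; apply rist_pinv; auto.
      + apply (cent_lemma Omega P Om HDC p Hp Hpp G HG (H j) (gam Omega t0) (nth (idx p) t0 idp) q0 d q1 (gam Omega t) (nth (idx p) t idp) q); auto.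
        intros h Hh1 Hh2. apply NNPP. intro Hne. apply Htr. exists h; auto.
      + rewrite comp_assoc, comp_pinv_r; auto. }

  set (GP := filter (fun jp => if dec (isGraph jp) then true else false) PL).
  set (CP := filter (fun jp => negb (if dec (isGraph jp) then true else false)) PL).
  assert (HGP : forall jp, In jp GP <-> In jp PL /\ isGraph jp).
  { intro jp. unfold GP. rewrite filter_In. destruct (dec (isGraph jp)); split; intros [? ?]; split; auto; try discriminate; contradiction. }
  assert (HCP : forall jp, In jp CP <-> In jp PL /\ ~ isGraph jp).
  { intro jp. unfold CP. rewrite filter_In. destruct (dec (isGraph jp)); simpl; split; intros [? ?]; split; auto; try discriminate; contradiction. }
  assert (Hlen : length GP + length CP = M).
  { unfold GP, CP. rewrite filter_partition. unfold PL. rewrite length_prod, length_seq. unfold M. rewrite Hr. reflexivity. }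
  set (dataf := fun jp => match dec (exists cK, CDp jp cK) with
      | left Hx => proj1_sig (constructive_indefinite_description _ Hx) | right _ => (idp, fun _ : perm Omega => False) end).
  assert (Hdata : forall jp, In jp CP -> CDp jp (dataf jp)).
  { intros jp Hjp. apply HCP in Hjp as [H1 H2]. unfold dataf. destruct (dec _) as [Hx|Hx].
    - destruct (constructive_indefinite_description _ Hx) as [cK HcK]. simpl. exact HcK.
    - exfalso. apply Hx. apply Hcd; auto. }
  set (Ci := fun i => map dataf (filter (fun jp => Nat.eqb (idx (snd jp)) i) CP)).
  assert (HCi : forall i c K, In (c,K) (Ci i) -> exists jp, In jp CP /\ idx (snd jp) = i /\ dataf jp = (c,K)).
  { intros i c K Hin. unfold Ci in Hin. apply in_map_iff in Hin as [jp [E Hin]]. apply filter_In in Hin as [H1 H2].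
    apply Nat.eqb_eq in H2. exists jp; auto. }
  assert (HCilen : forall i, length (Ci i) <= length CP).
  { intro i. unfold Ci. rewrite length_map. apply filter_length_le. }
  set (s := length GP + 1).
  set (Rb := fun i => Rist Omega G (Om (nth i reps idp))).
  assert (Hpick : forall i, i < m -> exists U, length U = s /\ NoDup U /\
            forall x, In x U -> Rb i x /\ forall c K, In (c,K) (Ci i) -> ~ inco c K x).
  { intros i Hi.
    assert (Hrep : In (nth i reps idp) P) by (apply Hr1, nth_In; auto).
    assert (HRb : is_subgroup Omega (Rb i)) by (apply rist_sg; auto).
    assert (HCiP : forall c K, In (c,K) (Ci i) -> is_subgroup Omega K /\ subset Omega K (Rb i) /\ Rb i c /\ ~ index_le Omega (Rb i) K M).
    { intros c K Hin. destruct (HCi i c K Hin) as [[j p] [Hjp [Ei Ed]]]. pose proof (Hdata _ Hjp) as Hd. rewrite Ed in Hd.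
      unfold CDp in Hd; simpl in Hd, Ei. apply HCP in Hjp as [Hjp _]. apply HPL in Hjp as [_ Hp].
      destruct (Hidx p Hp) as [_ Ep]. rewrite Ei in Ep. unfold Rb. rewrite <- Ep. tauto. }
    assert (Htriv : ~ index_le Omega (Rb i) (fun g => g = idp) M).
    { destruct (Hrist _ Hrep) as [[g0 [Hg0 Hg0ne]] HFC]. intro Hix.
      apply (cent_index Omega Om (nth i reps idp) G HG M g0 Hg0 Hg0ne HFC).
      eapply index_mono; [|exact Hix]. intros g ->. split; [apply (sg_id _ _ HRb)|reflexivity]. }
    assert (Hk : forall k, k <= s -> exists U, length U = k /\ NoDup U /\
            forall x, In x U -> Rb i x /\ forall c K, In (c,K) (Ci i) -> ~ inco c K x).
    { induction k as [|k IH]; intros Hk.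
      - exists []. split; [reflexivity|split; [constructor|intros x []]].
      - destruct (IH ltac:(lia)) as [U [HUl [HUn HUx]]].
        set (L := Ci i ++ map (fun u => (u, fun g : perm Omega => g = idp)) U).
        assert (HLlen : length L <= M).
        { unfold L. rewrite length_app, length_map. specialize (HCilen i). unfold s in Hk. lia. }
        assert (HN1 : forall c K, In (c,K) L -> is_subgroup Omega K /\ subset Omega K (Rb i) /\ Rb i c).
        { intros c K Hin. unfold L in Hin. apply in_app_iff in Hin as [Hin|Hin].
          * destruct (HCiP c K Hin) as [? [? [? _]]]. auto.
          * apply in_map_iff in Hin as [u [E Hu]]. inversion E; subst.
            split; [apply triv_sg|]. split; [intros g ->; apply (sg_id _ _ HRb)|]. apply HUx; auto. }
        assert (HN2 : forall c K, In (c,K) L -> ~ index_le Omega (Rb i) K (length L)).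
        { intros c K Hin Hix. apply (index_le_mono Omega (Rb i) K (length L) M HLlen) in Hix. unfold L in Hin.
          apply in_app_iff in Hin as [Hin|Hin].
          * destruct (HCiP c K Hin) as [_ [_ [_ Hn']]]. auto.
          * apply in_map_iff in Hin as [u [E Hu]]. inversion E; subst. auto. }
        destruct (neumann Omega (Rb i) L HRb HN1 HN2) as [x [Hx Hxn]].
        exists (x :: U). split; [simpl; lia|]. split.
        + constructor; auto. intro Hxu. apply (Hxn x (fun g => g = idp)).
          * unfold L. apply in_app_iff. right. apply in_map_iff. exists x. split; auto.
          * exists idp. split; reflexivity.
        + intros y [<-|Hy]; [|apply HUx; auto]. split; auto. intros c K Hin. apply Hxn. unfold L. apply in_app_iff; auto. }
    apply Hk. lia. }
  set (Ufun := fun i => match dec (i < m) with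
     | left Hi => proj1_sig (constructive_indefinite_description _ (Hpick i Hi)) | right _ => [] end).
  assert (HU : forall i, i < m -> length (Ufun i) = s /\ NoDup (Ufun i) /\
            forall x, In x (Ufun i) -> Rb i x /\ forall c K, In (c,K) (Ci i) -> ~ inco c K x).
  { intros i Hi. unfold Ufun. destruct (dec (i < m)) as [Hi'|Hi']; [|lia].
    destruct (constructive_indefinite_description _ (Hpick i Hi')) as [U HU']. simpl. exact HU'. }
  set (Us := map Ufun (seq 0 m)).
  assert (HUs : forall i, i < m -> nth i Us [] = Ufun i).
  { intros i Hi. unfold Us. rewrite (nth_indep _ [] (Ufun 0)) by (rewrite length_map, length_seq; auto).
    rewrite map_nth, seq_nth; auto. }
  assert (HUslen : length Us = m) by (unfold Us; rewrite length_map, length_seq; auto).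
  assert (Hgv : forall t, In t (grid (perm Omega) Us) -> valid t).
  { intros t Ht. destruct (grid_in _ Us t idp Ht) as [Hl Hc]. split; [rewrite Hl; auto|].
    intros i Hi. specialize (Hc i ltac:(lia)). rewrite HUs in Hc by auto. apply (HU i Hi) in Hc as [Hc _]. exact Hc. }
  set (gpieces := map (fun jp => (idx (snd jp), fun t => A (fst jp) (snd jp) (gam Omega t))) GP).
  assert (HG1 : forall U, In U Us -> length U = s /\ NoDup U).
  { intros U HUin. unfold Us in HUin. apply in_map_iff in HUin as [i [<- Hi]]. apply in_seq in Hi.
    destruct (HU i ltac:(lia)) as [? [? _]]. auto. }
  assert (HG2 : length gpieces < s) by (unfold gpieces; rewrite length_map; unfold s; lia).
  assert (HG3 : forall d Ap, In (d, Ap) gpieces -> d < length Us /\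
     forall t t', In t (grid (perm Omega) Us) -> In t' (grid (perm Omega) Us) ->
       (forall i, i <> d -> nth i t idp = nth i t' idp) -> t <> t' -> Ap t -> Ap t' -> False).
  { intros d Ap Hin. unfold gpieces in Hin. apply in_map_iff in Hin as [[j p] [E Hjp]]. inversion E; subst d Ap. clear E.
    apply HGP in Hjp as [Hjp Hg]. apply HPL in Hjp as [Hj Hp]. simpl.
    destruct (Hidx p Hp) as [Hip Ep]. split; [lia|].
    intros t1 t2 Ht1 Ht2 Hag Hne HA1 HA2. apply Hg. simpl.
    assert (Hv1 := Hgv t1 Ht1). assert (Hv2 := Hgv t2 Ht2).
    exists t1, (comp Omega (pinv (nth (idx p) t1 idp)) (nth (idx p) t2 idp)).
    assert (Hr1' := Hvr t1 p Hv1 Hp). assert (Hr2' := Hvr t2 p Hv2 Hp).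
    assert (Hp1 : is_perm Omega (nth (idx p) t1 idp)) by (destruct Hr1'; sgp).
    split; auto. split; auto. split; [apply rist_comp; auto; apply rist_pinv; auto|]. split.
    + intro E. apply Hne. pose proof Hv1 as [Hl1 _]. pose proof Hv2 as [Hl2 _].
      apply (nth_ext _ _ idp idp); [lia|]. intros i Hi. destruct (Nat.eq_dec i (idx p)) as [->|Hi'].
      * assert (Eb : nth (idx p) t2 idp = comp Omega (nth (idx p) t1 idp) (comp Omega (pinv (nth (idx p) t1 idp)) (nth (idx p) t2 idp)))
          by (rewrite comp_assoc, comp_pinv_r; auto).
        rewrite E in Eb. rewrite Eb. reflexivity.
      * apply Hag; auto.
    + rewrite <- (gam_update Omega Om G HG reps Hr3 t1 t2 (idx p)); auto. }
  destruct (grid_main (perm Omega) idp Us s gpieces HG1 HG2 HG3) as [t [Ht Htn]].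
  assert (Hv := Hgv t Ht).
  destruct (Hconf (gam Omega t) (gam_G Omega Om G HG reps t Hv)) as [j [Hj [p [Hp HAt]]]].
  assert (Hjp : In (j,p) PL) by (apply HPL; auto).
  destruct (classic (isGraph (j,p))) as [Hg|Hng].
  - apply (Htn (idx p) (fun t => A j p (gam Omega t))); auto.
    unfold gpieces. apply in_map_iff. exists (j,p). split; auto. apply HGP; auto.
  - assert (HinC : In (j,p) CP) by (apply HCP; auto).
    pose proof (Hdata _ HinC) as Hd. destruct (dataf (j,p)) as [c K] eqn:Edf.
    unfold CDp in Hd; simpl in Hd. destruct Hd as [_ [_ [_ [_ Hco]]]].
    destruct (Hidx p Hp) as [Hip _].
    assert (HinCi : In (c,K) (Ci (idx p))).
    { unfold Ci. apply in_map_iff. exists (j,p). split; auto. apply filter_In. split; auto. apply Nat.eqb_eq; auto. }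
    destruct (grid_in _ Us t idp Ht) as [_ Hc]. specialize (Hc (idx p) ltac:(lia)). rewrite HUs in Hc by auto.
    apply (HU (idx p) Hip) in Hc as [_ Hc]. apply (Hc c K HinCi). apply Hco; auto.
Qed.
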